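(* Let $A$ be a complex semisimple Banach algebra with a unit. Then $\mathrm{Soc}(A)$ is finite-dimensional if and only if the norm closure of $\mathrm{Soc}(A)$ in $A$ has an identity element. *)

(* Defs.v *)
From Stdlib Require Import Reals List.
Open Scope R_scope.

Definition C : Type := (R * R)%type.
Definition C0 : C := (0, 0).
Definition C1 : C := (1, 0).
Definition Cadd (a b : C) : C := (fst a + fst b, snd a + snd b).
Definition Cmul (a b : C) : C :=
  (fst a * fst b - snd a * snd b, fst a * snd b + snd a * fst b).
Definition Cmod (a : C) : R := sqrt (fst a * fst a + snd a * snd a).

Record CBanachAlgebra := {
  car :> Type;
  zero : car;
  add : car -> car -> car;
  opp : car -> car;
  smul : C -> car -> car;
  mul : car -> car -> car;
  one : car;
  norm : car -> R;
  add_assoc : forall x y z, add x (add y z) = add (add x y) z;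
  add_comm : forall x y, add x y = add y x;
  add_zero : forall x, add x zero = x;
  add_opp : forall x, add x (opp x) = zero;
  smul_one : forall x, smul C1 x = x;
  smul_assoc : forall a b x, smul a (smul b x) = smul (Cmul a b) x;
  smul_addC : forall a b x, smul (Cadd a b) x = add (smul a x) (smul b x);
  smul_addV : forall a x y, smul a (add x y) = add (smul a x) (smul a y);
  mul_assoc : forall x y z, mul x (mul y z) = mul (mul x y) z;
  mul_one_l : forall x, mul one x = x;
  mul_one_r : forall x, mul x one = x;
  mul_add_l : forall x y z, mul (add x y) z = add (mul x z) (mul y z);
  mul_add_r : forall x y z, mul x (add y z) = add (mul x y) (mul x z);
  mul_smul_l : forall a x y, mul (smul a x) y = smul a (mul x y);
  mul_smul_r : forall a x y, mul x (smul a y) = smul a (mul x y);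
  norm_nonneg : forall x, 0 <= norm x;
  norm_eq0 : forall x, norm x = 0 -> x = zero;
  norm_triangle : forall x y, norm (add x y) <= norm x + norm y;
  norm_smul : forall a x, norm (smul a x) = Cmod a * norm x;
  norm_mul : forall x y, norm (mul x y) <= norm x * norm y;
  complete : forall u : nat -> car,
    (forall eps, 0 < eps -> exists N, forall m n, (N <= m)%nat -> (N <= n)%nat ->
        norm (add (u m) (opp (u n))) < eps) ->
    exists l, forall eps, 0 < eps -> exists N, forall n, (N <= n)%nat ->
        norm (add (u n) (opp l)) < eps
}.

Section Defs.
Variable A : CBanachAlgebra.

Definition subset_eq (S T : A -> Prop) : Prop := forall x, S x <-> T x.

Definition left_ideal (L : A -> Prop) : Prop :=
  L (zero A) /\
  (forall x y, L x -> L y -> L (add A x y)) /\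
  (forall c x, L x -> L (smul A c x)) /\
  (forall a x, L x -> L (mul A a x)).

Definition minimal_left_ideal (L : A -> Prop) : Prop :=
  left_ideal L /\ (exists x, L x /\ x <> zero A) /\
  forall J, left_ideal J -> (forall x, J x -> L x) ->
    subset_eq J (fun x => x = zero A) \/ subset_eq J L.

Definition maximal_left_ideal (M : A -> Prop) : Prop :=
  left_ideal M /\ ~ M (one A) /\
  forall J, left_ideal J -> ~ J (one A) -> (forall x, M x -> J x) -> subset_eq J M.

Definition jacobson_radical (x : A) : Prop :=
  forall M, maximal_left_ideal M -> M x.

Definition semisimple : Prop :=
  forall x, jacobson_radical x -> x = zero A.

(** Socle: the sum (linear span) of all minimal left ideals ({0} if none). *)
Inductive socle : A -> Prop :=
| socle_zero : socle (zero A)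
| socle_add : forall L x y, minimal_left_ideal L -> L x -> socle y ->
    socle (add A x y).

Inductive in_span (l : list A) : A -> Prop :=
| span_zero : in_span l (zero A)
| span_step : forall c v y, In v l -> in_span l y ->
    in_span l (add A (smul A c v) y).

Definition finite_dimensional (S : A -> Prop) : Prop :=
  exists l : list A, forall x, S x -> in_span l x.

Definition closure (S : A -> Prop) (x : A) : Prop :=
  forall eps, 0 < eps -> exists y, S y /\ norm A (add A x (opp A y)) < eps.

Definition has_identity (S : A -> Prop) : Prop :=
  exists e, S e /\ forall x, S x -> mul A e x = x /\ mul A x e = x.

End Defs.

(* Main.v *)
From Stdlib Require Import Reals List Lra Lia Psatz Classical ClassicalEpsilon Permutation.
Require Import Defs.
Open Scope R_scope.

Infix "+'" := (add _) (at level 50, left associativity).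
Infix "*'" := (mul _) (at level 40, left associativity).
Notation "-' x" := (opp _ x) (at level 35, right associativity).
Notation "c %* x" := (smul _ c x) (at level 40, left associativity).
Notation "x -' y" := (add _ x (opp _ y)) (at level 50, left associativity).

Definition Copp (a : C) : C := (- fst a, - snd a).
Definition Cinv (a : C) : C :=
  (fst a / (fst a * fst a + snd a * snd a), - snd a / (fst a * fst a + snd a * snd a)).
Definition CR (r : R) : C := (r, 0).

Lemma C_ext (a b : C) : fst a = fst b -> snd a = snd b -> a = b.
Proof. destruct a, b; simpl; intros; subst; auto. Qed.

Ltac Csolve := repeat match goal with a : C |- _ => destruct a end;
  apply C_ext; unfold Cadd, Cmul, Copp, CR, C0, C1; simpl; ring.

Lemma Cadd_comm a b : Cadd a b = Cadd b a. Proof. Csolve. Qed.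
Lemma Cmul_comm a b : Cmul a b = Cmul b a. Proof. Csolve. Qed.
Lemma Cmul_assoc a b c : Cmul a (Cmul b c) = Cmul (Cmul a b) c. Proof. Csolve. Qed.
Lemma Cadd_0_l a : Cadd C0 a = a. Proof. Csolve. Qed.
Lemma Cadd_opp a : Cadd a (Copp a) = C0. Proof. Csolve. Qed.
Lemma Cmul_1_l a : Cmul C1 a = a. Proof. Csolve. Qed.
Lemma Cmul_0_l a : Cmul C0 a = C0. Proof. Csolve. Qed.
Lemma Cmul_addl a b c : Cmul (Cadd a b) c = Cadd (Cmul a c) (Cmul b c). Proof. Csolve. Qed.

Lemma Cnz_sq (a : C) : a <> C0 -> fst a * fst a + snd a * snd a <> 0.
Proof.
  destruct a as [x y]; simpl; intros H E. apply H. unfold C0.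
  assert (x = 0) by nra. assert (y = 0) by nra. subst; auto.
Qed.

Lemma Cinv_l a : a <> C0 -> Cmul (Cinv a) a = C1.
Proof.
  intros H. pose proof (Cnz_sq a H). destruct a as [x y]; simpl in *.
  apply C_ext; unfold Cmul, Cinv, C1; simpl; field; auto.
Qed.

Lemma Cmod_C0 : Cmod C0 = 0.
Proof. unfold Cmod, C0; simpl. replace (0*0+0*0) with 0 by ring. apply sqrt_0. Qed.

Lemma Cmod_CR r : Cmod (CR r) = Rabs r.
Proof. unfold Cmod, CR; simpl. replace (r*r+0*0) with (r*r) by ring. apply sqrt_Rsqr_abs. Qed.

Lemma Cmod_ge0 a : 0 <= Cmod a. Proof. apply sqrt_pos. Qed.

Lemma Cmod_opp a : Cmod (Copp a) = Cmod a.
Proof. unfold Cmod, Copp; simpl. f_equal; ring. Qed.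

Lemma Cmod_mul a b : Cmod (Cmul a b) = Cmod a * Cmod b.
Proof.
  unfold Cmod, Cmul; destruct a as [x y], b as [u v]; simpl.
  rewrite <- sqrt_mult; try nra. f_equal. ring.
Qed.

Lemma add_0_l {A : CBanachAlgebra} (x : A) : zero A +' x = x.
Proof. rewrite add_comm; apply add_zero. Qed.
Lemma add_opp_l {A : CBanachAlgebra} (x : A) : -' x +' x = zero A.
Proof. rewrite add_comm; apply add_opp. Qed.

Lemma add_cancel_l {A : CBanachAlgebra} (x y z : A) : x +' y = x +' z -> y = z.
Proof.
  intros H. rewrite <- (add_0_l y), <- (add_0_l z), <- (add_opp_l x).
  rewrite <- !add_assoc, H; auto.
Qed.

Lemma add_move {A : CBanachAlgebra} (x y z : A) : x +' y = z -> x = z -' y.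
Proof.
  intros H. rewrite <- H, <- add_assoc, add_opp, add_zero; auto.
Qed.

Lemma sub_eq0 {A : CBanachAlgebra} (x y : A) : x -' y = zero A -> x = y.
Proof. intros H. apply add_move in H. rewrite H. rewrite add_0_l.
  apply (add_cancel_l (-' y)). rewrite add_opp_l, add_opp. auto. Qed.

Lemma opp_opp {A : CBanachAlgebra} (x : A) : -' -' x = x.
Proof. apply (add_cancel_l (-' x)). rewrite add_opp, add_opp_l; auto. Qed.

Lemma smul_C0 {A : CBanachAlgebra} (x : A) : C0 %* x = zero A.
Proof.
  apply (add_cancel_l (C0 %* x)). rewrite <- smul_addC, add_zero.
  f_equal. Csolve.
Qed.

Lemma smul_zero {A : CBanachAlgebra} (c : C) : c %* zero A = zero A.
Proof.
  apply (add_cancel_l (c %* zero A)). rewrite <- smul_addV, !add_zero. auto.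
Qed.

Lemma smul_opp1 {A : CBanachAlgebra} (x : A) : Copp C1 %* x = -' x.
Proof.
  apply (add_cancel_l x). rewrite add_opp.
  rewrite <- (smul_one _ x) at 1. rewrite <- smul_addC, <- (smul_C0 x). f_equal. Csolve.
Qed.

Lemma opp_add {A : CBanachAlgebra} (x y : A) : -' (x +' y) = -' x +' -' y.
Proof. rewrite <- !smul_opp1, smul_addV. auto. Qed.

Lemma opp_zero {A : CBanachAlgebra} : -' zero A = zero A.
Proof. rewrite <- smul_opp1, smul_zero; auto. Qed.

Lemma smul_opp {A : CBanachAlgebra} c (x : A) : c %* (-' x) = -' (c %* x).
Proof. rewrite <- !smul_opp1, !smul_assoc. f_equal. Csolve. Qed.

Lemma smul_Copp {A : CBanachAlgebra} c (x : A) : Copp c %* x = -' (c %* x).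
Proof. rewrite <- !smul_opp1, !smul_assoc. f_equal. Csolve. Qed.

Lemma mul_0_l {A : CBanachAlgebra} (x : A) : zero A *' x = zero A.
Proof. rewrite <- (smul_C0 (zero A)) at 1. rewrite mul_smul_l, smul_C0; auto. Qed.
Lemma mul_0_r {A : CBanachAlgebra} (x : A) : x *' zero A = zero A.
Proof. rewrite <- (smul_C0 (zero A)) at 1. rewrite mul_smul_r, smul_C0; auto. Qed.
Lemma mul_opp_l {A : CBanachAlgebra} (x y : A) : (-' x) *' y = -' (x *' y).
Proof. rewrite <- !smul_opp1, mul_smul_l; auto. Qed.
Lemma mul_opp_r {A : CBanachAlgebra} (x y : A) : x *' (-' y) = -' (x *' y).
Proof. rewrite <- !smul_opp1, mul_smul_r; auto. Qed.
Lemma mul_sub_l {A : CBanachAlgebra} (x y z : A) : (x -' y) *' z = x *' z -' y *' z.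
Proof. rewrite mul_add_l, mul_opp_l; auto. Qed.
Lemma mul_sub_r {A : CBanachAlgebra} (x y z : A) : x *' (y -' z) = x *' y -' x *' z.
Proof. rewrite mul_add_r, mul_opp_r; auto. Qed.
Lemma sub_diag {A : CBanachAlgebra} (x : A) : x -' x = zero A.
Proof. apply add_opp. Qed.
Lemma sub_0_r {A : CBanachAlgebra} (x : A) : x -' zero A = x.
Proof. rewrite opp_zero, add_zero; auto. Qed.
Lemma smul_mul_comm {A : CBanachAlgebra} c (x y : A) : (c %* x) *' y = x *' (c %* y).
Proof. rewrite mul_smul_l, mul_smul_r; auto. Qed.

Lemma norm_zero {A : CBanachAlgebra} : norm A (zero A) = 0.
Proof. rewrite <- (smul_C0 (zero A)), norm_smul, Cmod_C0; ring. Qed.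

Lemma Cmod_mone : Cmod (Copp C1) = 1.
Proof. unfold Cmod, Copp, C1; simpl. transitivity (sqrt 1); [f_equal; ring | apply sqrt_1]. Qed.

Lemma norm_opp {A : CBanachAlgebra} (x : A) : norm A (-' x) = norm A x.
Proof. rewrite <- smul_opp1, norm_smul, Cmod_mone; ring. Qed.

Lemma norm_sub_sym {A : CBanachAlgebra} (x y : A) : norm A (x -' y) = norm A (y -' x).
Proof. rewrite <- norm_opp, opp_add, opp_opp, add_comm; auto. Qed.

Lemma eq_of_norm {A : CBanachAlgebra} (x y : A) :
  (forall eps, 0 < eps -> norm A (x -' y) < eps) -> x = y.
Proof.
  intros H. apply sub_eq0, norm_eq0.
  pose proof (norm_nonneg A (x -' y)).
  destruct (Rle_lt_or_eq_dec _ _ H0) as [Hl|]; auto.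
  specialize (H _ Hl). lra.
Qed.


Lemma li_opp {A : CBanachAlgebra} (L : A -> Prop) x : left_ideal A L -> L x -> L (-' x).
Proof. intros (H0&H1&H2&H3) Hx. rewrite <- smul_opp1. auto. Qed.
Lemma li_sub {A : CBanachAlgebra} (L : A -> Prop) x y : left_ideal A L -> L x -> L y -> L (x -' y).
Proof. intros HL Hx Hy. pose proof (li_opp L y HL Hy). destruct HL as (H0&H1&H2&H3). auto. Qed.
Lemma li_zero {A : CBanachAlgebra} (L : A -> Prop) : left_ideal A L -> L (zero A).
Proof. intros (H0&_). auto. Qed.
Lemma li_add {A : CBanachAlgebra} (L : A -> Prop) x y : left_ideal A L -> L x -> L y -> L (x +' y).
Proof. intros (H0&H1&H2&H3). auto. Qed.
Lemma li_smul {A : CBanachAlgebra} (L : A -> Prop) c x : left_ideal A L -> L x -> L (c %* x).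
Proof. intros (H0&H1&H2&H3). auto. Qed.
Lemma li_mul {A : CBanachAlgebra} (L : A -> Prop) a x : left_ideal A L -> L x -> L (a *' x).
Proof. intros (H0&H1&H2&H3). auto. Qed.

Lemma soc_add {A : CBanachAlgebra} (x y : A) : socle A x -> socle A y -> socle A (x +' y).
Proof.
  induction 1; intros Hy. rewrite add_0_l; auto.
  rewrite <- add_assoc. econstructor; eauto.
Qed.
Lemma soc_smul {A : CBanachAlgebra} c (x : A) : socle A x -> socle A (c %* x).
Proof.
  induction 1. rewrite smul_zero; constructor.
  rewrite smul_addV. econstructor; eauto. apply li_smul; auto. apply H.
Qed.
Lemma soc_lmul {A : CBanachAlgebra} a (x : A) : socle A x -> socle A (a *' x).
Proof.
  induction 1. rewrite mul_0_r; constructor.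
  rewrite mul_add_r. econstructor; eauto. apply li_mul; auto. apply H.
Qed.
Lemma soc_opp {A : CBanachAlgebra} (x : A) : socle A x -> socle A (-' x).
Proof. intros; rewrite <- smul_opp1; apply soc_smul; auto. Qed.
Lemma soc_sub {A : CBanachAlgebra} (x y : A) : socle A x -> socle A y -> socle A (x -' y).
Proof. intros; apply soc_add; auto; apply soc_opp; auto. Qed.

Definition rimage {A : CBanachAlgebra} (L : A -> Prop) (b : A) : A -> Prop :=
  fun y => exists x, L x /\ y = x *' b.

Lemma rimage_li {A : CBanachAlgebra} (L : A -> Prop) b : left_ideal A L -> left_ideal A (rimage L b).
Proof.
  intros HL. split; [|split; [|split]].
  - exists (zero A). split. apply li_zero; auto. rewrite mul_0_l; auto.
  - intros x y [u [Hu ->]] [v [Hv ->]]. exists (u +' v). split. apply li_add; auto. rewrite mul_add_l; auto.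
  - intros c x [u [Hu ->]]. exists (c %* u). split. apply li_smul; auto. rewrite mul_smul_l; auto.
  - intros a x [u [Hu ->]]. exists (a *' u). split. apply li_mul; auto. rewrite mul_assoc; auto.
Qed.

Lemma rimage_min {A : CBanachAlgebra} (L : A -> Prop) b : minimal_left_ideal A L ->
  (forall x, L x -> x *' b = zero A) \/ minimal_left_ideal A (rimage L b).
Proof.
  intros [HL [Hne Hmin]].
  destruct (classic (forall x, L x -> x *' b = zero A)) as [H|H]; [left; auto|right].
  apply not_all_ex_not in H. destruct H as [x0 H]. apply imply_to_and in H. destruct H as [Lx0 Hx0].
  split; [apply rimage_li; auto|split].
  - exists (x0 *' b). split; auto. exists x0; auto.
  - intros J HJ Jsub.
    set (J' := fun x => L x /\ J (x *' b)).
    assert (HJ' : left_ideal A J').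
    { split; [|split; [|split]].
      - split. apply li_zero; auto. rewrite mul_0_l. apply li_zero; auto.
      - intros x y [? ?] [? ?]. split. apply li_add; auto. rewrite mul_add_l. apply li_add; auto.
      - intros c x [? ?]. split. apply li_smul; auto. rewrite mul_smul_l. apply li_smul; auto.
      - intros a x [? ?]. split. apply li_mul; auto. rewrite <- mul_assoc. apply li_mul; auto. }
    destruct (Hmin J' HJ' (fun x H => proj1 H)) as [E|E].
    + left. intros y; split.
      * intros Jy. destruct (Jsub y Jy) as [x [Lx ->]].
        assert (J' x) by (split; auto). apply E in H. rewrite H, mul_0_l; auto.
      * intros ->. apply li_zero; auto.
    + right. intros y; split; auto. intros [x [Lx ->]]. apply E in Lx. apply Lx.
Qed.

Lemma soc_rmul {A : CBanachAlgebra} b (x : A) : socle A x -> socle A (x *' b).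
Proof.
  induction 1. rewrite mul_0_l; constructor.
  rewrite mul_add_l. destruct (rimage_min L b H) as [Z|M].
  - rewrite (Z x H0), add_0_l; auto.
  - econstructor; eauto. exists x; auto.
Qed.

Inductive Tgen {A : CBanachAlgebra} (x : A) : A -> Prop :=
| Tg0 : Tgen x (zero A)
| TgS : forall a y t, Tgen x t -> Tgen x (a *' x *' y +' t).

Lemma Tgen_add {A : CBanachAlgebra} (x : A) s t : Tgen x s -> Tgen x t -> Tgen x (s +' t).
Proof. induction 1; intros. rewrite add_0_l; auto. rewrite <- add_assoc. constructor; auto. Qed.
Lemma Tgen_smul {A : CBanachAlgebra} (x : A) c t : Tgen x t -> Tgen x (c %* t).
Proof. induction 1. rewrite smul_zero; constructor. rewrite smul_addV.
  rewrite <- !mul_smul_l. constructor; auto. Qed.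
Lemma Tgen_mul {A : CBanachAlgebra} (x : A) b t : Tgen x t -> Tgen x (b *' t).
Proof. induction 1. rewrite mul_0_r; constructor. rewrite mul_add_r, !mul_assoc. constructor; auto. Qed.

Lemma semiprime {A : CBanachAlgebra} (hA : semisimple A) (x : A) :
  (forall a c, (a *' x) *' (c *' x) = zero A) -> x = zero A.
Proof.
  intros Hx. apply hA. intros M [HM [H1 Hmax]].
  set (Q := fun z => exists m t, M m /\ Tgen x t /\ z = m +' t).
  assert (HQ : left_ideal A Q).
  { split; [|split; [|split]].
    - exists (zero A), (zero A). split. apply li_zero; auto. split. constructor. rewrite add_zero; auto.
    - intros u v [m1 [t1 [? [? ->]]]] [m2 [t2 [? [? ->]]]]. exists (m1 +' m2), (t1 +' t2).
      split. apply li_add; auto. split. apply Tgen_add; auto.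
      rewrite !add_assoc. f_equal. rewrite <- !add_assoc. f_equal. apply add_comm.
    - intros c u [m1 [t1 [? [? ->]]]]. exists (c %* m1), (c %* t1). split. apply li_smul; auto.
      split. apply Tgen_smul; auto. apply smul_addV.
    - intros a u [m1 [t1 [? [? ->]]]]. exists (a *' m1), (a *' t1). split. apply li_mul; auto.
      split. apply Tgen_mul; auto. apply mul_add_r. }
  assert (xT : forall t, Tgen x t -> x *' t = zero A).
  { induction 1. apply mul_0_r. rewrite mul_add_r, IHTgen, add_zero.
    rewrite !mul_assoc. specialize (Hx (one A) a). rewrite mul_one_l, mul_assoc in Hx.
    rewrite Hx. apply mul_0_l. }
  destruct (classic (Q (one A))) as [Q1|Q1].
  - destruct Q1 as [m [t [Hm [Ht E]]]].
    assert (x = x *' m). { rewrite <- (mul_one_r _ x) at 1. rewrite E, mul_add_r, (xT t Ht), add_zero; auto. }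
    rewrite H. apply li_mul; auto.
  - assert (sub : forall z, M z -> Q z). { intros z Hz. exists z, (zero A). split; auto. split. constructor. rewrite add_zero; auto. }
    specialize (Hmax Q HQ Q1 sub). apply Hmax. exists (zero A), x.
    split. apply li_zero; auto. split.
    + replace x with (one A *' x *' one A +' zero A) at 2. constructor; constructor.
      rewrite add_zero, mul_one_l, mul_one_r; auto.
    + rewrite add_0_l; auto.
Qed.

Definition lprinc {A : CBanachAlgebra} (y : A) : A -> Prop := fun z => exists a, z = a *' y.
Lemma lprinc_li {A : CBanachAlgebra} (y : A) : left_ideal A (lprinc y).
Proof.
  split; [|split; [|split]].
  - exists (zero A). rewrite mul_0_l; auto.
  - intros u v [a ->] [b ->]. exists (a +' b). rewrite mul_add_l; auto.
  - intros c u [a ->]. exists (c %* a). rewrite mul_smul_l; auto.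
  - intros c u [a ->]. exists (c *' a). rewrite mul_assoc; auto.
Qed.

Lemma min_gen {A : CBanachAlgebra} (L : A -> Prop) y :
  minimal_left_ideal A L -> L y -> y <> zero A -> forall z, L z -> exists a, z = a *' y.
Proof.
  intros [HL [_ Hmin]] Ly Hy z Lz.
  destruct (Hmin (lprinc y) (lprinc_li y)) as [E|E].
  - intros w [a ->]. apply li_mul; auto.
  - exfalso. apply Hy. apply E. exists (one A). rewrite mul_one_l; auto.
  - apply E; auto.
Qed.

Record minidem {A : CBanachAlgebra} (L : A -> Prop) (f : A) : Prop := {
  mi_min : minimal_left_ideal A L;
  mi_in : L f;
  mi_idem : f *' f = f;
  mi_nz : f <> zero A;
  mi_gen : forall y, L y <-> exists a, y = a *' f }.

Lemma mi_right {A : CBanachAlgebra} (L : A -> Prop) f y : minidem L f -> L y -> y *' f = y.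
Proof. intros M Ly. apply (mi_gen _ _ M) in Ly. destruct Ly as [a ->]. rewrite <- mul_assoc, (mi_idem _ _ M); auto. Qed.

Lemma brauer {A : CBanachAlgebra} (hA : semisimple A) (L : A -> Prop) :
  minimal_left_ideal A L -> exists f, minidem L f.
Proof.
  intros HM. pose proof HM as [HL [[x0 [Lx0 Hx0]] Hmin]].
  assert (exists y z, L y /\ L z /\ z *' y <> zero A).
  { apply NNPP; intros N. apply Hx0. apply semiprime; auto. intros a c.
    apply NNPP; intros N2. apply N. exists (c *' x0), (a *' x0). split; [|split]; [apply li_mul; auto|apply li_mul; auto|exact N2]. }
  destruct H as [y [z [Ly [Lz Hzy]]]].
  assert (Hy : y <> zero A). { intros ->. apply Hzy. apply mul_0_r. }
  set (Ly' := fun w => exists u, L u /\ w = u *' y).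
  assert (HLy' : left_ideal A Ly').
  { split; [|split; [|split]].
    - exists (zero A). split. apply li_zero; auto. rewrite mul_0_l; auto.
    - intros u v [a [? ->]] [b [? ->]]. exists (a +' b). split. apply li_add; auto. rewrite mul_add_l; auto.
    - intros c u [a [? ->]]. exists (c %* a). split. apply li_smul; auto. rewrite mul_smul_l; auto.
    - intros c u [a [? ->]]. exists (c *' a). split. apply li_mul; auto. rewrite mul_assoc; auto. }
  destruct (Hmin Ly' HLy') as [E|E].
  { intros w [u [Lu ->]]. apply li_mul; auto. }
  { exfalso. apply Hzy. apply E. exists z; auto. }
  destruct (proj2 (E y) Ly) as [f [Lf Ef]].
  set (K := fun u => L u /\ u *' y = zero A).
  assert (HK : left_ideal A K).
  { split; [|split; [|split]].
    - split. apply li_zero; auto. apply mul_0_l.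
    - intros u v [? Hu] [? Hv]. split. apply li_add; auto. rewrite mul_add_l, Hu, Hv, add_zero; auto.
    - intros c u [? Hu]. split. apply li_smul; auto. rewrite mul_smul_l, Hu, smul_zero; auto.
    - intros c u [? Hu]. split. apply li_mul; auto. rewrite <- mul_assoc, Hu, mul_0_r; auto. }
  destruct (Hmin K HK (fun u H => proj1 H)) as [EK|EK].
  2: { exfalso. apply Hzy. apply EK; auto. }
  assert (Hff : f *' f = f).
  { apply sub_eq0. apply EK. split. apply li_sub; auto. apply li_mul; auto.
    rewrite mul_sub_l, <- mul_assoc, <- Ef, <- Ef, sub_diag; auto. }
  assert (Hfnz : f <> zero A). { intros ->. apply Hy. rewrite Ef, mul_0_l; auto. }
  exists f. constructor; auto.
  intros w. split.
  - intros Lw. apply (min_gen L f HM Lf Hfnz w Lw).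
  - intros [a ->]. apply li_mul; auto.
Qed.


Lemma interval_glue (P : R -> R -> Prop) a b : a <= b ->
  (forall u v w, u <= v -> v <= w -> P u v -> P v w -> P u w) ->
  (forall x, a <= x <= b -> exists d, 0 < d /\ forall u v, x - d < u -> u <= v -> v < x + d -> P u v) ->
  P a b.
Proof.
  intros Hab Hglue Hloc.
  set (S := fun t => a <= t <= b /\ P a t).
  assert (Sa : S a).
  { split. lra. destruct (Hloc a) as [d [Hd H]]. lra. apply H; lra. }
  assert (Sb : bound S). { exists b. intros t [[? ?] _]. auto. }
  destruct (completeness S Sb (ex_intro _ a Sa)) as [s [Hub Hlub]].
  assert (Has : a <= s) by (apply Hub; auto).
  assert (Hsb : s <= b) by (apply Hlub; intros t [[? ?] _]; auto).
  destruct (Hloc s) as [d [Hd H]]. lra.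
  assert (exists t, S t /\ s - d < t).
  { apply NNPP; intros N. assert (s <= s - d). { apply Hlub. intros t St.
      destruct (Rle_or_lt t (s - d)); auto. exfalso; apply N; exists t; auto. } lra. }
  destruct H0 as [t [[[Hat Htb] Pt] Ht]].
  assert (Hts : t <= s) by (apply Hub; split; auto).
  set (v := Rmin b (s + d/2)).
  assert (Hv1 : v <= b) by apply Rmin_l.
  assert (Hv2 : v <= s + d/2) by apply Rmin_r.
  assert (Htv : t <= v). { unfold v, Rmin; destruct Rle_dec; lra. }
  assert (Pv : P a v). { apply (Hglue a t v); auto. apply H; lra. }
  assert (v <= s). { apply Hub. split; auto. lra. }
  unfold v, Rmin in *. destruct Rle_dec. auto. lra.
Qed.

Lemma square_bound (g : R -> R -> R) a b c d : a <= b -> c <= d ->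
  (forall x y, a <= x <= b -> c <= y <= d -> exists e K, 0 < e /\
     forall x' y', Rabs (x' - x) < e -> Rabs (y' - y) < e -> g x' y' <= K) ->
  exists K, forall x y, a <= x <= b -> c <= y <= d -> g x y <= K.
Proof.
  intros Hab Hcd Hloc.
  set (P2 := fun u v => exists K, forall x y, u <= x <= v -> c <= y <= d -> g x y <= K).
  change (P2 a b). apply interval_glue; auto.
  - intros u v w Huv Hvw [K1 H1] [K2 H2]. exists (Rmax K1 K2). intros x y Hx Hy.
    destruct (Rle_or_lt x v).
    + eapply Rle_trans. apply H1; auto. lra. apply Rmax_l.
    + eapply Rle_trans. apply H2; auto. lra. apply Rmax_r.
  - intros x0 Hx0.
    set (P1 := fun u v => exists r K, 0 < r /\ forall x' y', Rabs (x' - x0) < r -> u <= y' <= v -> g x' y' <= K).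
    assert (P1 c d).
    { apply interval_glue; auto.
      - intros u v w Huv Hvw [r1 [K1 [Hr1 H1]]] [r2 [K2 [Hr2 H2]]]. exists (Rmin r1 r2), (Rmax K1 K2).
        split. apply Rmin_glb_lt; auto. intros x' y' Hx' Hy'.
        assert (Rabs (x' - x0) < r1) by (eapply Rlt_le_trans; [exact Hx'|apply Rmin_l]).
        assert (Rabs (x' - x0) < r2) by (eapply Rlt_le_trans; [exact Hx'|apply Rmin_r]).
        destruct (Rle_or_lt y' v).
        + eapply Rle_trans. apply H1; auto. lra. apply Rmax_l.
        + eapply Rle_trans. apply H2; auto. lra. apply Rmax_r.
      - intros y0 Hy0. destruct (Hloc x0 y0 Hx0 Hy0) as [e [K [He H]]].
        exists e. split; auto. intros u v Hu Huv Hv. exists e, K. split; auto.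
        intros x' y' Hx' Hy'. apply H; auto. apply Rabs_def1; lra. }
    destruct H as [r [K [Hr H]]]. exists r. split; auto.
    intros u v Hu Huv Hv. exists K. intros x y Hx Hy. apply H; auto. apply Rabs_def1; lra.
Qed.

Ltac sqpos := repeat match goal with |- 0 <= _ + _ => apply Rplus_le_le_0_compat | |- 0 <= ?a * ?a => apply Rle_0_sqr
  | |- 0 <= _ * _ => apply Rmult_le_pos end.
Definition cis (t : R) : C := (cos t, sin t).

Lemma sin_abs_le x : Rabs (sin x) <= Rabs x.
Proof.
  destruct (Rtotal_order x 0) as [H|[H|H]].
  - assert (Hp : 0 < - x) by lra.
    pose proof (sin_lt_x (- x) Hp). pose proof (SIN_bound (-x)). rewrite sin_neg in H0, H1.
    unfold Rabs; repeat destruct Rcase_abs. all: try lra. destruct (Rle_or_lt x (-1)). lra. pose proof PI2_1. pose proof (sin_lt_0_var x). lra.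
  - subst. rewrite sin_0, Rabs_R0. lra.
  - pose proof (sin_lt_x x H). pose proof (SIN_bound x).
    unfold Rabs; repeat destruct Rcase_abs; try lra. destruct (Rle_or_lt 1 x). lra. pose proof PI2_1. pose proof (sin_gt_0 x). lra.
Qed.

Lemma cis_chord a b : Cmod (Cadd (cis a) (Copp (cis b))) <= Rabs (a - b).
Proof.
  unfold Cmod, cis, Cadd, Copp; simpl.
  rewrite <- sqrt_Rsqr_abs. apply sqrt_le_1_alt.
  pose proof (cos_2a_sin ((a - b)/2)).
  replace (2 * ((a - b) / 2)) with (a - b) in H by field.
  rewrite cos_minus in H.
  pose proof (sin_abs_le ((a-b)/2)).
  pose proof (sin2_cos2 a). pose proof (sin2_cos2 b). unfold Rsqr in *.
  assert (sin ((a - b) / 2) * sin ((a - b) / 2) <= ((a-b)/2) * ((a-b)/2)).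
  { pose proof (Rsqr_le_abs_1 _ _ H0). unfold Rsqr in H3. auto. }
  nra.
Qed.

Lemma Cmod_cis t : Cmod (cis t) = 1.
Proof. unfold Cmod, cis; simpl. pose proof (sin2_cos2 t). unfold Rsqr in H.
  rewrite <- sqrt_1. f_equal. lra. Qed.

Lemma Cmod_triangle a b : Cmod (Cadd a b) <= Cmod a + Cmod b.
Proof.
  destruct a as [x y], b as [u v]; unfold Cmod, Cadd; simpl.
  apply Rsqr_incr_0_var. 2: { apply Rplus_le_le_0_compat; apply sqrt_pos. }
  rewrite Rsqr_sqrt by sqpos. unfold Rsqr.
  pose proof (sqrt_sqrt (x*x+y*y) ltac:(sqpos)).
  pose proof (sqrt_sqrt (u*u+v*v) ltac:(sqpos)).
  assert (x*u + y*v <= sqrt (x*x+y*y) * sqrt (u*u+v*v)).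
  { rewrite <- sqrt_mult by sqpos.
    destruct (Rle_or_lt (x*u+y*v) 0). { pose proof (sqrt_pos ((x * x + y * y) * (u * u + v * v))). lra. }
    apply Rsqr_incr_0_var. rewrite Rsqr_sqrt by sqpos. unfold Rsqr.
    pose proof (Rle_0_sqr (x*v - y*u)) as Hq. unfold Rsqr in Hq. nra. apply sqrt_pos. }
  nra.
Qed.

Lemma Cmod_xy_le (x y : R) : Cmod (x, y) <= Rabs x + Rabs y.
Proof.
  unfold Cmod; simpl. apply Rsqr_incr_0_var.
  2: { pose proof (Rabs_pos x); pose proof (Rabs_pos y); lra. }
  rewrite Rsqr_sqrt by sqpos. unfold Rsqr.
  pose proof (Rabs_pos x); pose proof (Rabs_pos y).
  replace (x*x) with (Rabs x * Rabs x) by (rewrite <- Rabs_mult, Rabs_right; nra).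
  replace (y*y) with (Rabs y * Rabs y) by (rewrite <- Rabs_mult, Rabs_right; nra). nra.
Qed.

Lemma Rabs_le_Cmod_fst (x y : R) : Rabs x <= Cmod (x, y).
Proof. unfold Cmod; simpl. rewrite <- sqrt_Rsqr_abs. apply sqrt_le_1_alt. unfold Rsqr; nra. Qed.
Lemma Rabs_le_Cmod_snd (x y : R) : Rabs y <= Cmod (x, y).
Proof. unfold Cmod; simpl. rewrite <- sqrt_Rsqr_abs. apply sqrt_le_1_alt. unfold Rsqr; nra. Qed.


Lemma sub_sub_same {A : CBanachAlgebra} (a c d : A) : (a -' c) -' (a -' d) = d -' c.
Proof.
  rewrite opp_add, opp_opp, <- !add_assoc, (add_comm _ (-' a) d), (add_comm _ (-' c) (d +' -' a)),
    add_assoc, (add_comm _ d (-' a)), add_assoc, add_opp, add_0_l. auto.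
Qed.

Lemma smul_sub_C {A : CBanachAlgebra} (z w : C) (x : A) : z %* x -' w %* x = (Cadd z (Copp w)) %* x.
Proof. rewrite smul_addC, smul_Copp; auto. Qed.

Lemma sub_sub_comm4 {A : CBanachAlgebra} (a b c d : A) : (a +' b) -' (c +' d) = (a -' c) +' (b -' d).
Proof.
  rewrite opp_add. rewrite <- !add_assoc. f_equal. rewrite !add_assoc. f_equal.
  apply add_comm.
Qed.

Lemma norm_tri_sub {A : CBanachAlgebra} (x y : A) : norm A x <= norm A y + norm A (x -' y).
Proof.
  replace x with (y +' (x -' y)) at 1. apply norm_triangle.
  rewrite add_comm, <- add_assoc, add_opp_l, add_zero; auto.
Qed.

Lemma norm_sub_le {A : CBanachAlgebra} (x y : A) : norm A (x -' y) <= norm A x + norm A y.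
Proof. rewrite <- (norm_opp y). apply norm_triangle. Qed.

Lemma smul_CR_norm {A : CBanachAlgebra} r (x : A) : norm A (CR r %* x) = Rabs r * norm A x.
Proof. rewrite norm_smul, Cmod_CR; auto. Qed.

(* the Gelfand-Mazur setting *)
Record GM {A : CBanachAlgebra} (f b : A) (F : C -> A) : Prop := {
  gm_ff : f *' f = f;
  gm_fnz : f <> zero A;
  gm_fb : f *' b = b;
  gm_bf : b *' f = b;
  gm_F1 : forall z, F z *' (b -' z %* f) = f;
  gm_F2 : forall z, (b -' z %* f) *' F z = f;
  gm_F3 : forall z, f *' F z = F z;
  gm_F4 : forall z, F z *' f = F z }.

Lemma gm_resolvent {A : CBanachAlgebra} (f b : A) F (H : GM f b F) z w :
  F z -' F w = (Cadd z (Copp w)) %* (F z *' F w).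
Proof.
  transitivity (F z *' ((b -' w %* f) -' (b -' z %* f)) *' F w).
  - rewrite mul_sub_r, mul_sub_l, (gm_F1 _ _ _ H). rewrite <- (mul_assoc _ (F z)), (gm_F2 _ _ _ H).
    rewrite (gm_F4 _ _ _ H), (gm_F3 _ _ _ H). auto.
  - rewrite sub_sub_same, smul_sub_C. rewrite mul_smul_r, mul_smul_l. f_equal.
    rewrite <- mul_assoc, (gm_F3 _ _ _ H). auto.
Qed.

Lemma gm_res_bound {A : CBanachAlgebra} (f b : A) F (H : GM f b F) z w :
  norm A (F z -' F w) <= Cmod (Cadd z (Copp w)) * (norm A (F z) * norm A (F w)).
Proof.
  rewrite (gm_resolvent f b F H), norm_smul. apply Rmult_le_compat_l. apply Cmod_ge0. apply norm_mul.
Qed.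

Lemma gm_local {A : CBanachAlgebra} (f b : A) F (H : GM f b F) w :
  exists d, 0 < d /\ forall z, Cmod (Cadd z (Copp w)) < d -> norm A (F z) <= 2 * norm A (F w).
Proof.
  set (M := norm A (F w)). assert (HM : 0 <= M) by apply norm_nonneg.
  exists (/ (2 * (M + 1))). split. apply Rinv_0_lt_compat. lra.
  intros z Hz.
  pose proof (norm_tri_sub (F z) (F w)). pose proof (gm_res_bound f b F H z w).
  fold M in H0, H1.
  pose proof (norm_nonneg A (F z)). pose proof (Cmod_ge0 (Cadd z (Copp w))).
  set (N := norm A (F z)) in *. set (c := Cmod (Cadd z (Copp w))) in *.
  assert (c * (2 * (M + 1)) < 1).
  { apply (Rmult_lt_compat_r (2 * (M+1))) in Hz. rewrite Rinv_l in Hz. lra. lra. lra. }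
  assert (c * (N * M) <= N / 2).
  { assert (c * M <= / 2) by nra. unfold Rdiv. nra. }
  lra.
Qed.

Lemma gm_disk {A : CBanachAlgebra} (f b : A) F (H : GM f b F) c : 0 <= c ->
  exists K, 0 <= K /\ forall z, Cmod z <= c -> norm A (F z) <= K.
Proof.
  intros Hc.
  destruct (square_bound (fun x y => norm A (F (x, y))) (-c) c (-c) c) as [K HK]; try lra.
  - intros x y _ _. destruct (gm_local f b F H (x, y)) as [d [Hd Hl]].
    exists (d/2), (2 * norm A (F (x,y))). split. lra.
    intros x' y' Hx Hy. apply Hl. unfold Cadd, Copp; simpl.
    eapply Rle_lt_trans. apply Cmod_xy_le. change (x' + - x) with (x' - x). change (y' + - y) with (y' - y). lra.
  - exists (Rmax K 0). split. apply Rmax_r. intros [x y] Hz.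
    pose proof (Rabs_le_Cmod_fst x y). pose proof (Rabs_le_Cmod_snd x y).
    pose proof (Rle_abs x). pose proof (Rle_abs (- x)). pose proof (Rle_abs y). pose proof (Rle_abs (- y)).
    rewrite Rabs_Ropp in *.
    eapply Rle_trans. apply HK; lra. apply Rmax_l.
Qed.


Lemma G1 {A : CBanachAlgebra} (p q r s : A) : (p -' q) -' (r -' s) = p -' (q +' r) +' s.
Proof. rewrite !opp_add, opp_opp, <- !add_assoc. auto. Qed.

Lemma corner_expand {A : CBanachAlgebra} (f X : A) a b : f *' f = f -> X *' f = X -> f *' X = X ->
  (X -' a %* f) *' (X -' b %* f) = X *' X -' (Cadd a b) %* X +' (Cmul a b) %* f.
Proof.
  intros Hff HXf HfX.
  rewrite mul_sub_l, !mul_sub_r, mul_smul_r, HXf, !mul_smul_l, mul_smul_r, HfX, Hff, smul_assoc.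
  rewrite G1, smul_addC, (add_comm _ (b %* X)). auto.
Qed.

Lemma corner_factor {A : CBanachAlgebra} (f X : A) a : f *' f = f -> X *' f = X -> f *' X = X ->
  (X -' a %* f) *' (X -' Copp a %* f) = X *' X -' (Cmul a a) %* f.
Proof.
  intros. rewrite corner_expand; auto.
  replace (Cadd a (Copp a)) with C0 by Csolve. replace (Cmul a (Copp a)) with (Copp (Cmul a a)) by Csolve.
  rewrite smul_C0, opp_zero, add_zero, smul_Copp. auto.
Qed.

Lemma corner_factor' {A : CBanachAlgebra} (f X : A) a : f *' f = f -> X *' f = X -> f *' X = X ->
  (X -' Copp a %* f) *' (X -' a %* f) = X *' X -' (Cmul a a) %* f.
Proof.
  intros. rewrite corner_expand; auto.
  replace (Cadd (Copp a) a) with C0 by Csolve. replace (Cmul (Copp a) a) with (Copp (Cmul a a)) by Csolve.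
  rewrite smul_C0, opp_zero, add_zero, smul_Copp. auto.
Qed.

Lemma half_double {A : CBanachAlgebra} (Y : A) : CR (/2) %* (Y +' Y) = Y.
Proof.
  rewrite <- (smul_one _ Y) at 1 2. rewrite <- smul_addC, smul_assoc.
  replace (Cmul (CR (/ 2)) (Cadd C1 C1)) with C1 by (apply C_ext; unfold Cmul, CR, Cadd, C1; simpl; field).
  apply smul_one.
Qed.

Lemma sum_cancel {A : CBanachAlgebra} (Y Z : A) a : (Y -' a %* Z) +' (Y -' Copp a %* Z) = Y +' Y.
Proof.
  rewrite smul_Copp, opp_opp. rewrite <- !add_assoc. f_equal.
  rewrite (add_comm _ Y), add_assoc, add_opp_l, add_0_l. auto.
Qed.

Lemma diff_double {A : CBanachAlgebra} (Y Z : A) a : (Y -' Copp a %* Z) -' (Y -' a %* Z) = (Cadd a a) %* Z.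
Proof.
  rewrite sub_sub_same, smul_Copp, opp_opp, smul_addC. auto.
Qed.

Fixpoint gpow {A : CBanachAlgebra} (f x : A) (k : nat) : A :=
  match k with O => f | S k => x *' gpow f x k end.

Lemma gpow_f_l {A : CBanachAlgebra} (f x : A) k : f *' f = f -> f *' x = x -> f *' gpow f x k = gpow f x k.
Proof. intros Hff Hfx. induction k; simpl; auto. rewrite mul_assoc, Hfx; auto. Qed.
Lemma gpow_f_r {A : CBanachAlgebra} (f x : A) k : f *' f = f -> x *' f = x -> gpow f x k *' f = gpow f x k.
Proof. intros Hff Hxf. induction k; simpl; auto. rewrite <- mul_assoc, IHk; auto. Qed.
Lemma gpow_comm {A : CBanachAlgebra} (f x z : A) k : f *' z = z -> z *' f = z -> x *' z = z *' x ->
  gpow f x k *' z = z *' gpow f x k.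
Proof. intros H1 H2 H3. induction k; simpl. rewrite H1, H2; auto.
  rewrite <- mul_assoc, IHk, !mul_assoc, H3. auto. Qed.
Lemma gpow_add {A : CBanachAlgebra} (f x : A) i j : f *' f = f -> f *' x = x ->
  gpow f x (i + j) = gpow f x i *' gpow f x j.
Proof. intros Hff Hfx. induction i; simpl. rewrite gpow_f_l; auto. rewrite IHi, mul_assoc; auto. Qed.
Lemma gpow_inv {A : CBanachAlgebra} (f x z : A) k : f *' f = f -> f *' z = z -> z *' f = z ->
  x *' z = z *' x -> x *' z = f -> gpow f x k *' gpow f z k = f.
Proof.
  intros Hff H1 H2 Hc Hxz. induction k; simpl; auto.
  rewrite mul_assoc, <- (mul_assoc _ x), (gpow_comm f x z); auto.
  rewrite mul_assoc, Hxz, <- mul_assoc, IHk. auto.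
Qed.
Lemma gpow_comm2 {A : CBanachAlgebra} (f x z : A) i j : f *' f = f -> f *' z = z -> z *' f = z ->
  f *' x = x -> x *' f = x -> x *' z = z *' x ->
  gpow f x i *' gpow f z j = gpow f z j *' gpow f x i.
Proof.
  intros Hff H1 H2 H3 H4 Hc. induction j; simpl.
  rewrite gpow_f_l, gpow_f_r; auto.
  rewrite mul_assoc, (gpow_comm f x z); auto. rewrite <- mul_assoc, IHj, mul_assoc. auto.
Qed.
Lemma gpow_norm {A : CBanachAlgebra} (f x : A) k : norm A (gpow f x k) <= norm A x ^ k * norm A f.
Proof. induction k; simpl. lra. eapply Rle_trans. apply norm_mul.
  rewrite Rmult_assoc. apply Rmult_le_compat_l. apply norm_nonneg. auto. Qed.


Fixpoint Mean {A : CBanachAlgebra} (F : C -> A) (m : nat) (r t : R) : A :=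
  match m with
  | O => F (Cmul (CR r) (cis t))
  | S k => CR (/2) %* (Mean F k r t +' Mean F k r (t + PI / 2 ^ k))
  end.

Definition alpha (m : nat) (r t : R) : C := Cmul (CR (r ^ (2 ^ m))) (cis (INR (2 ^ m) * t)).

Lemma alpha_0 r t : alpha 0 r t = Cmul (CR r) (cis t).
Proof. unfold alpha. simpl. rewrite Rmult_1_r, Rmult_1_l. auto. Qed.

Lemma alpha_S m r t : alpha (S m) r t = Cmul (alpha m r t) (alpha m r t).
Proof.
  unfold alpha. replace (2 ^ S m)%nat with (2 ^ m + 2 ^ m)%nat by (simpl; lia).
  rewrite pow_add, plus_INR. replace ((INR (2 ^ m) + INR (2 ^ m)) * t) with (2 * (INR (2^m) * t)) by ring.
  unfold cis. rewrite cos_2a, sin_2a. apply C_ext; unfold Cmul, CR; simpl; ring.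
Qed.

Lemma INR_pow2 m : INR (2 ^ m) = 2 ^ m.
Proof. rewrite pow_INR. replace (INR 2) with 2 by (simpl; ring). auto. Qed.

Lemma alpha_shift m r t : alpha m r (t + PI / 2 ^ m) = Copp (alpha m r t).
Proof.
  unfold alpha. rewrite INR_pow2.
  replace (2 ^ m * (t + PI / 2 ^ m)) with (2 ^ m * t + PI) by (field; apply pow_nonzero; lra).
  unfold cis. rewrite neg_cos, neg_sin. apply C_ext; unfold Cmul, CR, Copp; simpl; ring.
Qed.

Lemma alpha_at0 m r : alpha m r 0 = CR (r ^ (2 ^ m)).
Proof. unfold alpha, cis. rewrite Rmult_0_r, cos_0, sin_0. apply C_ext; unfold Cmul, CR; simpl; ring. Qed.

Lemma pow2_pos m : (1 <= 2 ^ m)%nat.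
Proof. induction m; simpl; lia. Qed.

Lemma mean_id {A : CBanachAlgebra} (f b : A) F (H : GM f b F) m : forall r t,
  Mean F m r t *' (gpow f b (2 ^ m) -' alpha m r t %* f) = gpow f b (pred (2 ^ m)).
Proof.
  pose proof (gm_ff _ _ _ H) as Hff. pose proof (gm_fb _ _ _ H) as Hfb. pose proof (gm_bf _ _ _ H) as Hbf.
  induction m; intros r t.
  - simpl. rewrite Hbf, alpha_0. apply (gm_F1 _ _ _ H).
  - set (N := (2 ^ m)%nat) in *. pose proof (pow2_pos m) as HN. fold N in HN.
    replace (2 ^ S m)%nat with (N + N)%nat by (simpl; unfold N; lia).
    replace (pred (N + N)) with (pred N + N)%nat by lia.
    rewrite !gpow_add; auto. rewrite alpha_S.
    set (B := gpow f b N). set (Bm := gpow f b (pred N)). set (a := alpha m r t).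
    assert (HBf : B *' f = B) by (apply gpow_f_r; auto).
    assert (HfB : f *' B = B) by (apply gpow_f_l; auto).
    assert (HBmf : Bm *' f = Bm) by (apply gpow_f_r; auto).
    simpl Mean. rewrite mul_smul_l, mul_add_l.
    rewrite <- (corner_factor f B a) at 1; auto.
    rewrite <- (corner_factor' f B a); auto.
    rewrite !mul_assoc. rewrite IHm. fold a.
    assert (E : Mean F m r (t + PI / 2 ^ m) *' (B -' Copp a %* f) = Bm).
    { unfold a. rewrite <- alpha_shift. apply IHm. }
    rewrite E. rewrite !mul_sub_r, !mul_smul_r. fold Bm. rewrite HBmf. rewrite (add_comm _ (Bm *' B -' Copp a %* Bm)), sum_cancel. apply half_double.
Qed.

Lemma Mean_lip {A : CBanachAlgebra} (f b : A) F (H : GM f b F) c K r :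
  0 <= r <= c -> 0 <= K -> (forall z, Cmod z <= c -> norm A (F z) <= K) ->
  forall m t t', norm A (Mean F m r t -' Mean F m r t') <= K * K * r * Rabs (t - t').
Proof.
  intros Hr HK HFK. induction m; intros t t'.
  - simpl. eapply Rle_trans. apply (gm_res_bound f b F H).
    replace (Cadd (Cmul (CR r) (cis t)) (Copp (Cmul (CR r) (cis t')))) with
      (Cmul (CR r) (Cadd (cis t) (Copp (cis t')))) by Csolve.
    rewrite Cmod_mul, Cmod_CR, Rabs_right by lra.
    assert (forall u, norm A (F (Cmul (CR r) (cis u))) <= K).
    { intros u. apply HFK. rewrite Cmod_mul, Cmod_CR, Cmod_cis, Rabs_right by lra. lra. }
    pose proof (H0 t). pose proof (H0 t'). pose proof (cis_chord t t').
    pose proof (norm_nonneg A (F (Cmul (CR r) (cis t)))). pose proof (norm_nonneg A (F (Cmul (CR r) (cis t')))).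
    pose proof (Cmod_ge0 (Cadd (cis t) (Copp (cis t')))).
    assert (r * Cmod (Cadd (cis t) (Copp (cis t'))) <= r * Rabs (t - t')) by (apply Rmult_le_compat_l; lra).
    assert (norm A (F (Cmul (CR r) (cis t))) * norm A (F (Cmul (CR r) (cis t'))) <= K * K).
    { apply Rmult_le_compat; lra. }
    pose proof (Rabs_pos (t - t')).
    assert (0 <= r * Cmod (Cadd (cis t) (Copp (cis t')))) by nra.
    replace (K * K * r * Rabs (t - t')) with ((r * Rabs (t - t')) * (K * K)) by ring.
    apply Rmult_le_compat; try lra. apply Rmult_le_pos; apply norm_nonneg.
  - simpl Mean. rewrite <- smul_opp, <- smul_addV, sub_sub_comm4, smul_CR_norm.
    rewrite Rabs_right by lra.
    eapply Rle_trans. apply Rmult_le_compat_l. lra. apply norm_triangle.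
    pose proof (IHm t t'). pose proof (IHm (t + PI / 2 ^ m) (t' + PI / 2 ^ m)).
    replace (t + PI / 2 ^ m - (t' + PI / 2 ^ m)) with (t - t') in H1 by ring. lra.
Qed.


Lemma INR_lt_pow2 n : INR n < 2 ^ n.
Proof. induction n. simpl; lra. rewrite S_INR. simpl. pose proof (pow_le 2 n ltac:(lra)).
  assert (1 <= 2 ^ n). { clear. induction n; simpl; lra. } lra. Qed.

Lemma gm_false {A : CBanachAlgebra} (f b : A) F (H : GM f b F) : False.
Proof.
  pose proof (gm_ff _ _ _ H) as Hff. pose proof (gm_fb _ _ _ H) as Hfb. pose proof (gm_bf _ _ _ H) as Hbf.
  pose proof (gm_fnz _ _ _ H) as Hfnz.
  set (c := norm A b + 1).
  assert (Hb0 : 0 <= norm A b) by apply norm_nonneg.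
  assert (Hc : 0 < c) by (unfold c; lra).
  destruct (gm_disk f b F H c) as [K [HK HFK]]. lra.
  set (y := F C0).
  assert (Hyb : y *' b = f).
  { pose proof (gm_F1 _ _ _ H C0). rewrite smul_C0, sub_0_r in H0. auto. }
  assert (Hby : b *' y = f).
  { pose proof (gm_F2 _ _ _ H C0). rewrite smul_C0, sub_0_r in H0. auto. }
  assert (Hfy : f *' y = y) by apply (gm_F3 _ _ _ H).
  assert (Hyf : y *' f = y) by apply (gm_F4 _ _ _ H).
  assert (Hcomm : b *' y = y *' b) by congruence.
  assert (Hnf : 0 < norm A f).
  { pose proof (norm_nonneg A f). destruct (Rle_lt_or_eq_dec _ _ H0); auto. exfalso. apply Hfnz, norm_eq0; auto. }
  set (E := K * K * c * PI * (norm A f + 1) * norm A b).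
  destruct (INR_unbounded E) as [m Hm].
  pose proof (INR_lt_pow2 m) as Hm2.
  set (N := (2 ^ m)%nat). pose proof (pow2_pos m) as HN. fold N in HN.
  set (Y := gpow f y N). set (B := gpow f b N). set (Bm := gpow f b (pred N)).
  assert (HYB : Y *' B = f) by (apply gpow_inv; auto).
  assert (HBY : B *' Y = f) by (apply gpow_inv; auto).
  assert (HfY : f *' Y = Y) by (apply gpow_f_l; auto).
  assert (HYf : Y *' f = Y) by (apply gpow_f_r; auto).
  assert (HBf : B *' f = B) by (apply gpow_f_r; auto).
  assert (HfB : f *' B = B) by (apply gpow_f_l; auto).
  assert (HBmf : Bm *' f = Bm) by (apply gpow_f_r; auto).
  assert (HYb : (Y *' Y) *' b = b *' (Y *' Y)).
  { assert (HYb0 : Y *' b = b *' Y) by (apply gpow_comm; auto).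
    rewrite <- mul_assoc, HYb0, mul_assoc, HYb0, <- mul_assoc. auto. }
  assert (HBmb : Bm *' b = B).
  { unfold Bm, B. rewrite (gpow_comm f b b); auto. replace N with (S (pred N)) at 2 by lia. auto. }
  assert (HYpos : 0 < norm A Y).
  { pose proof (norm_nonneg A Y). destruct (Rle_lt_or_eq_dec _ _ H0); auto. exfalso.
    symmetry in e. apply norm_eq0 in e. apply Hfnz. rewrite <- HYB, e, mul_0_l. auto. }
  assert (HYbig : 1 <= norm A Y * norm A b ^ N).
  { pose proof (norm_mul A Y B). rewrite HYB in H0. pose proof (gpow_norm f b N). fold B in H1.
    assert (norm A f <= norm A Y * (norm A b ^ N * norm A f)).
    { eapply Rle_trans. apply H0. apply Rmult_le_compat_l. apply norm_nonneg. auto. }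
    apply (Rmult_le_reg_r (norm A f)); auto. lra. }
  set (r := Rpower (/ norm A Y) (/ INR N)).
  assert (HINR : 0 < INR N) by (apply lt_0_INR; lia).
  assert (Hr0 : 0 < r) by (unfold r, Rpower; apply exp_pos).
  assert (HrN : r ^ N = / norm A Y).
  { unfold r. rewrite <- Rpower_pow by (unfold Rpower; apply exp_pos). rewrite Rpower_mult.
    rewrite Rinv_l by lra. apply Rpower_1. apply Rinv_0_lt_compat; auto. }
  assert (Hrc : r <= c).
  { unfold r. replace c with (Rpower (c ^ N) (/ INR N)).
    2: { rewrite <- Rpower_pow by auto. rewrite Rpower_mult, Rinv_r by lra. apply Rpower_1; auto. }
    apply Rle_Rpower_l. left; apply Rinv_0_lt_compat; auto.
    split. apply Rinv_0_lt_compat; auto.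
    assert (norm A b ^ N <= c ^ N) by (apply pow_incr; unfold c; lra).
    apply (Rmult_le_reg_l (norm A Y)); auto. rewrite Rinv_r by lra. nra. }
  set (rho := CR (r ^ N)).
  set (P := Mean F m r 0). set (Q := Mean F m r (PI / 2 ^ m)).
  assert (HP : P *' (B -' rho %* f) = Bm).
  { unfold P, rho, B, Bm, N. rewrite <- alpha_at0. apply (mean_id f b F H). }
  assert (HQ : Q *' (B -' Copp rho %* f) = Bm).
  { unfold Q, rho, B, Bm, N. rewrite <- alpha_at0, <- alpha_shift. replace (0 + PI / 2 ^ m) with (PI / 2 ^ m) by ring.
    apply (mean_id f b F H). }
  set (D := P -' Q).
  assert (HD : norm A D <= K * K * r * (PI / 2 ^ m)).
  { unfold D, P, Q. eapply Rle_trans. apply (Mean_lip f b F H c K r); auto. lra.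
    replace (0 - PI / 2 ^ m) with (- (PI / 2 ^ m)) by ring. rewrite Rabs_Ropp, Rabs_right. lra.
    apply Rle_ge. apply Rmult_le_pos. pose proof PI_RGT_0; lra. left; apply Rinv_0_lt_compat, pow_lt; lra. }
  assert (Hkey1 : D *' (B *' B -' Cmul rho rho %* f) = Cadd rho rho %* Bm).
  { unfold D. rewrite mul_sub_l.
    rewrite <- (corner_factor f B rho) at 1; auto. rewrite <- (corner_factor' f B rho); auto.
    rewrite !mul_assoc, HP, HQ. rewrite !mul_sub_r, !mul_smul_r, HBmf. apply diff_double. }
  assert (Hkey2 : (B *' B -' Cmul rho rho %* f) *' (Y *' Y) = f -' Cmul rho rho %* (Y *' Y)).
  { rewrite mul_sub_l, mul_smul_l, mul_assoc, <- (mul_assoc _ B B Y), HBY, HBf, HBY, mul_assoc, HfY. f_equal.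
    }
  assert (Hkey3 : Bm *' (Y *' Y) *' b = Y).
  { rewrite <- mul_assoc, HYb, mul_assoc, HBmb, mul_assoc, HBY, HfY. auto. }
  assert (Hkey : D *' (f -' Cmul rho rho %* (Y *' Y)) *' b = Cadd rho rho %* Y).
  { rewrite <- Hkey2, mul_assoc, Hkey1, !mul_smul_l, Hkey3. auto. }
  assert (Hrho : Cmod rho = r ^ N). { unfold rho. rewrite Cmod_CR. apply Rabs_right. left; apply pow_lt; auto. }
  assert (HL : norm A (Cadd rho rho %* Y) = 2).
  { rewrite norm_smul. replace (Cadd rho rho) with (CR (2 * r ^ N)) by (unfold rho; Csolve).
    rewrite Cmod_CR, Rabs_right, HrN. field. lra. apply Rle_ge. rewrite HrN. left. apply Rmult_lt_0_compat. lra.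
    apply Rinv_0_lt_compat; auto. }
  assert (HR1 : norm A (Cmul rho rho %* (Y *' Y)) <= 1).
  { rewrite norm_smul, Cmod_mul, Hrho. eapply Rle_trans. apply Rmult_le_compat_l.
    pose proof (pow_lt r N Hr0). nra. apply norm_mul.
    rewrite HrN. right. field. lra. }
  assert (HR : norm A (D *' (f -' Cmul rho rho %* (Y *' Y)) *' b) <= norm A D * (norm A f + 1) * norm A b).
  { eapply Rle_trans. apply norm_mul. apply Rmult_le_compat_r. auto.
    eapply Rle_trans. apply norm_mul. apply Rmult_le_compat_l. apply norm_nonneg.
    eapply Rle_trans. apply norm_sub_le. lra. }
  rewrite Hkey, HL in HR.
  assert (H2m : 0 < 2 ^ m) by (apply pow_lt; lra).
  assert (norm A D * (norm A f + 1) * norm A b <= E / 2 ^ m).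
  { unfold E. unfold Rdiv.
    assert (norm A D <= K * K * c * PI * / 2 ^ m).
    { eapply Rle_trans. apply HD. unfold Rdiv. pose proof PI_RGT_0.
      assert (0 <= K * K) by nra. pose proof (Rinv_0_lt_compat _ H2m).
      replace (K * K * r * (PI * / 2 ^ m)) with ((K * K) * r * (PI * / 2 ^ m)) by ring.
      replace (K * K * c * PI * / 2 ^ m) with ((K * K) * c * (PI * / 2 ^ m)) by ring.
      apply Rmult_le_compat_r. nra. apply Rmult_le_compat_l; auto. }
    assert (0 <= norm A f + 1) by lra.
    replace (K * K * c * PI * (norm A f + 1) * norm A b * / 2 ^ m)
      with (K * K * c * PI * / 2 ^ m * (norm A f + 1) * norm A b) by ring.
    apply Rmult_le_compat_r; auto. apply Rmult_le_compat_r; auto. }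
  assert (E / 2 ^ m < 1).
  { apply (Rmult_lt_reg_r (2 ^ m)); auto. unfold Rdiv. rewrite Rmult_assoc, Rinv_l by lra. lra. }
  lra.
Qed.


Lemma corner_inv {A : CBanachAlgebra} (L : A -> Prop) f (M : minidem L f) c :
  f *' c = c -> c *' f = c -> c <> zero A ->
  exists d, d *' c = f /\ c *' d = f /\ f *' d = d /\ d *' f = d.
Proof.
  intros Hfc Hcf Hc.
  pose proof (mi_idem _ _ M) as Hff. pose proof (mi_nz _ _ M) as Hfnz.
  assert (Lc : L c). { apply (mi_gen _ _ M). exists c. auto. }
  destruct (min_gen L c (mi_min _ _ M) Lc Hc f (mi_in _ _ M)) as [z Hz].
  set (d := f *' z *' f).
  assert (Hdc : d *' c = f). { unfold d. rewrite <- mul_assoc, Hfc, <- mul_assoc, <- Hz, Hff. auto. }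
  assert (Hfd : f *' d = d). { unfold d. rewrite !mul_assoc, Hff. auto. }
  assert (Hdf : d *' f = d). { unfold d. rewrite <- mul_assoc, Hff. auto. }
  assert (Hd : d <> zero A). { intros E. apply Hfnz. rewrite <- Hdc, E, mul_0_l. auto. }
  assert (Ld : L d). { apply (mi_gen _ _ M). exists d. auto. }
  destruct (min_gen L d (mi_min _ _ M) Ld Hd f (mi_in _ _ M)) as [z' Hz'].
  set (d' := f *' z' *' f).
  assert (Hd'd : d' *' d = f). { unfold d'. rewrite <- mul_assoc, Hfd, <- mul_assoc, <- Hz', Hff. auto. }
  assert (Ecd : c = d').
  { rewrite <- Hfc, <- Hd'd, <- mul_assoc, Hdc. unfold d'. rewrite <- mul_assoc, Hff. auto. }
  exists d. repeat split; auto. rewrite Ecd. auto.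
Qed.

Lemma corner_scalar {A : CBanachAlgebra} (L : A -> Prop) f (M : minidem L f) a :
  exists lam, f *' a *' f = lam %* f.
Proof.
  pose proof (mi_idem _ _ M) as Hff. pose proof (mi_nz _ _ M) as Hfnz.
  apply NNPP. intros N.
  set (b := f *' a *' f).
  assert (Hex : forall z, exists d, d *' (b -' z %* f) = f /\ (b -' z %* f) *' d = f /\ f *' d = d /\ d *' f = d).
  { intros z. apply (corner_inv L f M).
    - unfold b. rewrite mul_sub_r, mul_smul_r, Hff, !mul_assoc, Hff. auto.
    - unfold b. rewrite mul_sub_l, mul_smul_l, Hff, <- mul_assoc, Hff. auto.
    - intros E. apply N. exists z. apply sub_eq0. auto. }
  set (F := fun z => proj1_sig (constructive_indefinite_description _ (Hex z))).
  apply (gm_false f b F).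
  constructor; auto.
  - unfold b. rewrite !mul_assoc, Hff. auto.
  - unfold b. rewrite <- mul_assoc, Hff. auto.
  - intros z. unfold F. destruct constructive_indefinite_description as [d Hd]. simpl. tauto.
  - intros z. unfold F. destruct constructive_indefinite_description as [d Hd]. simpl. tauto.
  - intros z. unfold F. destruct constructive_indefinite_description as [d Hd]. simpl. tauto.
  - intros z. unfold F. destruct constructive_indefinite_description as [d Hd]. simpl. tauto.
Qed.

Lemma dim1 {A : CBanachAlgebra} (L L' : A -> Prop) f f' (M : minidem L f) (M' : minidem L' f') :
  exists y, forall a, exists lam, f *' a *' f' = lam %* y.
Proof.
  pose proof (mi_idem _ _ M) as Hff. pose proof (mi_idem _ _ M') as Hff'.
  destruct (classic (forall a, f *' a *' f' = zero A)) as [Z|Z].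
  { exists (zero A). intros a. exists C0. rewrite Z, smul_zero. auto. }
  apply not_all_ex_not in Z. destruct Z as [a0 Ha0].
  set (y := f *' a0 *' f').
  assert (Ly : L' y). { apply (mi_gen _ _ M'). exists (f *' a0). auto. }
  destruct (min_gen L' y (mi_min _ _ M') Ly Ha0 f' (mi_in _ _ M')) as [z Hz].
  set (z' := f' *' z *' f).
  assert (Hfy : f *' y = y). { unfold y. rewrite !mul_assoc, Hff. auto. }
  assert (Hyf : y *' f' = y). { unfold y. rewrite <- mul_assoc, Hff'. auto. }
  assert (Hzy : z' *' y = f'). { unfold z'. rewrite <- mul_assoc, Hfy, <- mul_assoc, <- Hz, Hff'. auto. }
  destruct (corner_scalar L f M (a0 *' f' *' z)) as [mu Hmu].
  assert (Hyz : y *' z' = mu %* f).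
  { rewrite <- Hmu. unfold z'. rewrite !mul_assoc, Hyf. unfold y. repeat rewrite mul_assoc. auto. }
  assert (Hmu0 : mu <> C0).
  { intros E. apply Ha0. fold y. rewrite <- Hyf, <- Hzy, mul_assoc, Hyz, E, !smul_C0, mul_0_l. auto. }
  exists y. intros a.
  destruct (corner_scalar L' f' M' (z *' f *' a)) as [lam Hlam].
  assert (E1 : z' *' (f *' a *' f') = lam %* f').
  { rewrite <- Hlam. unfold z'. repeat rewrite mul_assoc. rewrite <- (mul_assoc _ _ f f), Hff. auto. }
  assert (E2 : mu %* (f *' a *' f') = lam %* y).
  { transitivity (y *' z' *' (f *' a *' f')).
    - rewrite Hyz, mul_smul_l, !mul_assoc, Hff. auto.
    - rewrite <- mul_assoc, E1, mul_smul_r, Hyf. auto. }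
  exists (Cmul (Cinv mu) lam). rewrite <- smul_assoc, <- E2, smul_assoc, Cinv_l, smul_one; auto.
Qed.


Fixpoint powA {A : CBanachAlgebra} (d : A) (k : nat) : A :=
  match k with O => one A | S k => d *' powA d k end.
Fixpoint psum {A : CBanachAlgebra} (d : A) (n : nat) : A :=
  match n with O => zero A | S n => psum d n +' powA d n end.

Lemma powA_comm {A : CBanachAlgebra} (d : A) k : powA d k *' d = d *' powA d k.
Proof. induction k; simpl. rewrite mul_one_l, mul_one_r; auto. rewrite <- mul_assoc, IHk. auto. Qed.

Lemma powA_norm {A : CBanachAlgebra} (d : A) k : norm A (powA d k) <= norm A d ^ k * norm A (one A).
Proof. induction k; simpl. lra. eapply Rle_trans. apply norm_mul.
  rewrite Rmult_assoc. apply Rmult_le_compat_l. apply norm_nonneg. auto. Qed.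

Lemma psum_tel {A : CBanachAlgebra} (d : A) n : psum d n *' (one A -' d) = one A -' powA d n.
Proof.
  induction n; simpl. rewrite mul_0_l, sub_diag. auto.
  rewrite mul_add_l, IHn, mul_sub_r, mul_one_r, powA_comm.
  rewrite <- !add_assoc. f_equal. rewrite add_assoc, add_opp_l, add_0_l. auto.
Qed.

Lemma psum_diff {A : CBanachAlgebra} (d : A) n j : norm A d < 1 ->
  norm A (psum d (j + n) -' psum d n) <= norm A (one A) * norm A d ^ n / (1 - norm A d).
Proof.
  intros Hd. pose proof (norm_nonneg A d) as Hd0. pose proof (norm_nonneg A (one A)) as H10.
  set (t := norm A d) in *. set (M := norm A (one A)) in *.
  assert (forall j, norm A (psum d (j + n) -' psum d n) <= M * t ^ n * (1 - t ^ j) / (1 - t)).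
  { induction j0; simpl.
    - rewrite sub_diag, norm_zero. unfold Rdiv. rewrite Rminus_diag. rewrite Rmult_0_r, Rmult_0_l. lra.
    - replace (psum d (j0 + n) +' powA d (j0 + n) -' psum d n) with
        ((psum d (j0 + n) -' psum d n) +' powA d (j0 + n)).
      2: { rewrite <- !add_assoc. f_equal. apply add_comm. }
      eapply Rle_trans. apply norm_triangle.
      eapply Rle_trans. apply Rplus_le_compat. apply IHj0. apply powA_norm. fold t M.
      rewrite pow_add. right. field. lra. }
  eapply Rle_trans. apply H.
  pose proof (pow_le t n Hd0). pose proof (pow_le t j Hd0).
  assert (t ^ j <= 1). { clear -Hd Hd0. induction j; simpl; nra. }
  unfold Rdiv. apply Rmult_le_compat_r. left; apply Rinv_0_lt_compat; lra.
  assert (0 <= M * t ^ n) by (apply Rmult_le_pos; auto). rewrite <- (Rmult_1_r (M * t ^ n)) at 2. apply Rmult_le_compat_l; lra.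
Qed.

Lemma sub_chain {A : CBanachAlgebra} (x y z : A) : (x -' y) +' (y -' z) = x -' z.
Proof. rewrite <- !add_assoc. f_equal. rewrite add_assoc, add_opp_l, add_0_l. auto. Qed.

Lemma sub_self_l {A : CBanachAlgebra} (a b : A) : (a -' b) -' a = -' b.
Proof. rewrite add_comm, add_assoc, add_opp_l, add_0_l. auto. Qed.

Lemma neumann {A : CBanachAlgebra} (d : A) : norm A d < 1 -> exists q, q *' (one A -' d) = one A.
Proof.
  intros Hd. pose proof (norm_nonneg A d) as Hd0. pose proof (norm_nonneg A (one A)) as H10.
  set (t := norm A d) in *. set (M := norm A (one A)) in *.
  assert (Ht : Rabs t < 1) by (rewrite Rabs_right; lra).
  assert (Hcauchy : forall eps, 0 < eps -> exists N, forall m n, (N <= m)%nat -> (N <= n)%nat ->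
            norm A (psum d m -' psum d n) < eps).
  { intros eps He.
    destruct (pow_lt_1_zero t Ht (eps * (1 - t) / (M + 1))) as [N HN].
    { apply Rmult_lt_0_compat. apply Rmult_lt_0_compat; lra. apply Rinv_0_lt_compat; lra. }
    exists N. intros m n Hm Hn.
    assert (gen : forall m n, (N <= n)%nat -> (n <= m)%nat -> norm A (psum d m -' psum d n) < eps).
    { intros m0 n0 Hn0 Hnm. replace m0 with ((m0 - n0) + n0)%nat by lia.
      eapply Rle_lt_trans. apply psum_diff; auto. fold t M.
      specialize (HN n0 Hn0). rewrite Rabs_right in HN by (apply Rle_ge, pow_le; lra).
      apply (Rmult_lt_reg_r (1 - t)). lra. unfold Rdiv. rewrite Rmult_assoc, Rinv_l, Rmult_1_r by lra.
      assert (M * t ^ n0 <= M * (eps * (1 - t) / (M + 1))).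
      { apply Rmult_le_compat_l; lra. }
      assert (M * (eps * (1 - t) / (M + 1)) < eps * (1 - t)).
      { unfold Rdiv. replace (M * (eps * (1 - t) * / (M + 1))) with ((eps * (1 - t)) * (M / (M + 1))) by (field; lra).
        assert (M / (M+1) < 1). { apply (Rmult_lt_reg_r (M+1)). lra. unfold Rdiv. rewrite Rmult_assoc, Rinv_l by lra. lra. }
        assert (0 < eps * (1 - t)) by (apply Rmult_lt_0_compat; lra). nra. }
      lra. }
    destruct (Nat.le_ge_cases n m). apply gen; auto.
    rewrite norm_sub_sym. apply gen; auto. }
  destruct (complete A (psum d) Hcauchy) as [q Hq].
  exists q. apply eq_of_norm. intros eps He.
  assert (Hk : 0 < eps / (2 * (M + t + 1))) by (apply Rdiv_lt_0_compat; lra).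
  destruct (Hq _ Hk) as [N1 HN1].
  destruct (pow_lt_1_zero t Ht (eps / (2 * (M + 1)))) as [N2 HN2]. apply Rdiv_lt_0_compat; lra.
  set (n := (N1 + N2)%nat).
  specialize (HN1 n ltac:(unfold n; lia)). specialize (HN2 n ltac:(unfold n; lia)).
  rewrite Rabs_right in HN2 by (apply Rle_ge, pow_le; lra).
  rewrite <- (sub_chain _ (psum d n *' (one A -' d))), <- mul_sub_l, psum_tel, sub_self_l.
  eapply Rle_lt_trans. apply norm_triangle. rewrite norm_opp.
  eapply Rle_lt_trans. apply Rplus_le_compat. apply norm_mul. apply powA_norm. fold t M.
  rewrite norm_sub_sym in HN1.
  assert (norm A (one A -' d) <= M + t) by (apply norm_sub_le).
  pose proof (norm_nonneg A (q -' psum d n)).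
  assert (norm A (q -' psum d n) * norm A (one A -' d) <= eps / (2 * (M + t + 1)) * (M + t)).
  { apply Rmult_le_compat; try lra. apply norm_nonneg. }
  assert (eps / (2 * (M + t + 1)) * (M + t) < eps / 2).
  { unfold Rdiv. replace (eps * / (2 * (M + t + 1)) * (M + t)) with ((eps / 2) * ((M + t) / (M + t + 1))) by (field; lra).
    assert ((M + t) / (M + t + 1) < 1). { apply (Rmult_lt_reg_r (M+t+1)). lra. unfold Rdiv. rewrite Rmult_assoc, Rinv_l by lra. lra. }
    assert (0 <= (M + t) / (M + t + 1)) by (unfold Rdiv; apply Rmult_le_pos; [lra| left; apply Rinv_0_lt_compat; lra]). nra. }
  assert (t ^ n * M <= eps / (2 * (M + 1)) * M) by (apply Rmult_le_compat_r; lra).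
  assert (eps / (2 * (M + 1)) * M < eps / 2).
  { unfold Rdiv. replace (eps * / (2 * (M + 1)) * M) with ((eps / 2) * (M / (M + 1))) by (field; lra).
    assert (M / (M + 1) < 1). { apply (Rmult_lt_reg_r (M+1)). lra. unfold Rdiv. rewrite Rmult_assoc, Rinv_l by lra. lra. }
    assert (0 <= M / (M + 1)) by (unfold Rdiv; apply Rmult_le_pos; [lra| left; apply Rinv_0_lt_compat; lra]). nra. }
  lra.
Qed.


Lemma span_mono {A : CBanachAlgebra} (l l' : list A) x : (forall v, In v l -> In v l') ->
  in_span A l x -> in_span A l' x.
Proof. intros Hs. induction 1. constructor. constructor; auto. Qed.

Lemma span_add {A : CBanachAlgebra} (l : list A) x y : in_span A l x -> in_span A l y -> in_span A l (x +' y).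
Proof. induction 1; intros Hy. rewrite add_0_l; auto. rewrite <- add_assoc. constructor; auto. Qed.

Lemma span_smul {A : CBanachAlgebra} (l : list A) c x : in_span A l x -> in_span A l (c %* x).
Proof. induction 1. rewrite smul_zero; constructor. rewrite smul_addV, smul_assoc. constructor; auto. Qed.

Lemma span_app_add {A : CBanachAlgebra} (l l' : list A) x y : in_span A l x -> in_span A l' y ->
  in_span A (l ++ l') (x +' y).
Proof. intros Hx Hy. apply span_add; [eapply span_mono; [|exact Hx]|eapply span_mono; [|exact Hy]]; intros; apply in_or_app; auto. Qed.

Lemma span_single {A : CBanachAlgebra} (v : A) c : in_span A (v :: nil) (c %* v).
Proof. rewrite <- (add_zero _ (c %* v)). constructor. left; auto. constructor. Qed.

Definition sumL {A : CBanachAlgebra} (l : list A) : A := fold_right (add A) (zero A) l.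

Definition good {A : CBanachAlgebra} (p : A * A) : Prop := exists L, minidem L (snd p) /\ L (fst p).

Lemma soc_decomp {A : CBanachAlgebra} (hA : semisimple A) x : socle A x ->
  exists l : list (A * A), x = sumL (map fst l) /\ forall p, In p l -> good p.
Proof.
  induction 1.
  - exists nil. split; auto. intros p [].
  - destruct IHsocle as [l [-> Hl]]. destruct (brauer hA L H) as [f Hf].
    exists ((x, f) :: l). split; auto. intros p [<-|Hp]; auto. exists L; auto.
Qed.

Lemma pair_span {A : CBanachAlgebra} (l1 l2 : list (A * A)) :
  (forall p, In p l1 -> good p) -> (forall p, In p l2 -> good p) ->
  exists W, forall a, in_span A W (sumL (map fst l1) *' a *' sumL (map fst l2)).
Proof.
  intros H1 H2. induction l1 as [|[x f] l1 IH1].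
  - exists nil. intros a. simpl. rewrite !mul_0_l. constructor.
  - destruct IH1 as [W1 HW1]. intros; apply H1; right; auto.
    destruct (H1 (x, f) (or_introl eq_refl)) as [L [ML Lx]]. simpl in ML, Lx.
    assert (exists W, forall a, in_span A W (x *' a *' sumL (map fst l2))).
    { clear H1 HW1. induction l2 as [|[z g] l2 IH2].
      - exists nil. intros a. simpl. rewrite mul_0_r. constructor.
      - destruct IH2 as [W2 HW2]. intros; apply H2; right; auto.
        destruct (H2 (z, g) (or_introl eq_refl)) as [L' [ML' Lz]]. simpl in ML', Lz.
        destruct (dim1 L L' f g ML ML') as [y Hy].
        exists ((x *' y) :: W2). intros a. simpl. rewrite mul_add_r.
        change ((x *' y) :: W2) with (((x *' y) :: nil) ++ W2). apply span_app_add; auto.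
        destruct (Hy (a *' z)) as [lam Hlam].
        assert (E : x *' (f *' (a *' z) *' g) = x *' a *' z).
        { rewrite <- (mul_assoc _ f (a *' z) g), <- (mul_assoc _ a z g), (mi_right L' g z ML' Lz).
          rewrite mul_assoc, (mi_right L f x ML Lx), mul_assoc. auto. }
        rewrite <- E, Hlam, mul_smul_r. apply span_single. }
    destruct H as [W2 HW2].
    exists (W2 ++ W1). intros a. simpl. rewrite mul_add_l, mul_add_l. apply span_app_add; auto.
Qed.

Lemma soc_in_closure {A : CBanachAlgebra} x : socle A x -> closure A (socle A) x.
Proof. intros Hx eps He. exists x. split; auto. rewrite sub_diag, norm_zero. auto. Qed.

Lemma sub_sub_self {A : CBanachAlgebra} (x y : A) : x -' (x -' y) = y.
Proof. rewrite opp_add, opp_opp, add_assoc, add_opp, add_0_l. auto. Qed.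

Lemma rev_dir {A : CBanachAlgebra} (hA : semisimple A) :
  has_identity A (closure A (socle A)) -> finite_dimensional A (socle A).
Proof.
  intros [e [Ce He]].
  assert (Hee : e *' e = e) by (apply He; auto).
  assert (Hse : forall s, socle A s -> e *' s = s /\ s *' e = s) by (intros; apply He, soc_in_closure; auto).
  assert (Se : socle A e).
  { destruct (Ce 1 Rlt_0_1) as [s [Ss Hs]].
    destruct (neumann (e -' s) Hs) as [q Hq].
    assert (E : (one A -' (e -' s)) *' e = s).
    { rewrite mul_sub_l, mul_one_l, mul_sub_l, Hee, (proj2 (Hse s Ss)). apply sub_sub_self. }
    replace e with (q *' s). apply soc_lmul; auto.
    rewrite <- E, mul_assoc, Hq, mul_one_l. auto. }
  destruct (soc_decomp hA e Se) as [l [El Hl]].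
  destruct (pair_span l l Hl Hl) as [W HW].
  exists W. intros s Ss. rewrite <- (proj1 (Hse s Ss)), <- (proj2 (Hse (e *' s) (soc_lmul e s Ss))).
  rewrite El. apply HW.
Qed.


Lemma span_nil {A : CBanachAlgebra} (x : A) : in_span A nil x -> x = zero A.
Proof. inversion 1; auto. destruct H0. Qed.

Lemma span_decomp {A : CBanachAlgebra} (v : A) l x : in_span A (v :: l) x ->
  exists a r, in_span A l r /\ x = a %* v +' r.
Proof.
  induction 1.
  - exists C0, (zero A). split. constructor. rewrite smul_C0, add_zero. auto.
  - destruct IHin_span as [a [r [Hr ->]]]. destruct H as [<-|Hv].
    + exists (Cadd c a), r. split; auto. rewrite smul_addC, add_assoc. auto.
    + exists a, (c %* v0 +' r). split. constructor; auto.
      rewrite !add_assoc, (add_comm _ (c %* v0)). auto.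
Qed.

Lemma span_sub_span {A : CBanachAlgebra} (l1 l2 : list A) x : (forall v, In v l1 -> in_span A l2 v) ->
  in_span A l1 x -> in_span A l2 x.
Proof. intros Hs. induction 1. constructor. apply span_add; auto. apply span_smul; auto. Qed.

Lemma Forall2_exists {X Y : Type} (R : X -> Y -> Prop) (l : list X) :
  (forall x, In x l -> exists y, R x y) -> exists l', Forall2 R l l'.
Proof.
  induction l as [|x l IH]; intros H. exists nil; constructor.
  destruct (H x (or_introl eq_refl)) as [y Hy]. destruct IH as [l' Hl']. intros; apply H; right; auto.
  exists (y :: l'). constructor; auto.
Qed.

Lemma Forall2_in_r {X Y : Type} (R : X -> Y -> Prop) l l' y : Forall2 R l l' -> In y l' -> exists x, In x l /\ R x y.
Proof. induction 1; intros []. subst. exists x; split; auto. left; auto.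
  destruct (IHForall2 H1) as [z [? ?]]. exists z; split; auto. right; auto. Qed.

Lemma Forall2_in_l {X Y : Type} (R : X -> Y -> Prop) l l' x : Forall2 R l l' -> In x l -> exists y, In y l' /\ R x y.
Proof. induction 1; intros []. subst. exists y; split; auto. left; auto.
  destruct (IHForall2 H1) as [z [? ?]]. exists z; split; auto. right; auto. Qed.

Lemma span_elem {A : CBanachAlgebra} (l : list A) v : In v l -> in_span A l v.
Proof. intros H. rewrite <- (smul_one _ v), <- (add_zero _ (C1 %* v)). constructor; auto. constructor. Qed.

Lemma abel1 {A : CBanachAlgebra} (X Y Z : A) : X +' Y = (Y -' Z) +' (X +' Z).
Proof. rewrite <- add_assoc, (add_comm _ X Z), (add_assoc _ (-' Z) Z X), add_opp_l, add_0_l. apply add_comm. Qed.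

Lemma dep_lemma {A : CBanachAlgebra} (l : list A) : forall g : list A,
  (length l < length g)%nat -> (forall x, In x g -> in_span A l x) ->
  exists x r, Permutation g (x :: r) /\ in_span A r x.
Proof.
  induction l as [|v l' IH]; intros g Hlen Hg.
  - destruct g as [|x r]. simpl in Hlen; lia.
    exists x, r. split; auto. rewrite (span_nil x (Hg x (or_introl eq_refl))). constructor.
  - destruct (classic (forall x, In x g -> in_span A l' x)) as [Hall|Hnot].
    { apply IH; auto. simpl in Hlen; lia. }
    apply not_all_ex_not in Hnot. destruct Hnot as [x0 Hx0]. apply imply_to_and in Hx0.
    destruct Hx0 as [Ing Hns].
    destruct (in_split x0 g Ing) as [g1 [g2 Eg]].
    set (g0 := g1 ++ g2).
    assert (Pg : Permutation g (x0 :: g0)). { rewrite Eg. symmetry. apply Permutation_middle. }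
    destruct (span_decomp v l' x0 (Hg x0 Ing)) as [a0 [r0 [Hr0 Ex0]]].
    assert (Ha0 : a0 <> C0). { intros E. apply Hns. rewrite Ex0, E, smul_C0, add_0_l. auto. }
    set (R := fun x y => in_span A l' y /\ exists c, x = y +' c %* x0).
    assert (HR : forall x, In x g0 -> exists y, R x y).
    { intros x Hx. assert (In x g). { apply (Permutation_in _ (Permutation_sym Pg)). right; auto. }
      destruct (span_decomp v l' x (Hg x H)) as [a [r [Hr Ex]]].
      set (c := Cmul a (Cinv a0)).
      exists (r -' c %* r0). split.
      - apply span_add; auto. rewrite <- smul_opp1, smul_assoc. apply span_smul; auto.
      - exists c. rewrite Ex, Ex0. rewrite smul_addV, smul_assoc.
        replace (Cmul c a0) with a.
        2: { unfold c. rewrite <- Cmul_assoc, Cinv_l by auto. rewrite Cmul_comm, Cmul_1_l. auto. }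
        apply abel1. }
    destruct (Forall2_exists R g0 HR) as [g0' Hg0'].
    assert (Hlen0 : (length l' < length g0')%nat).
    { rewrite <- (Forall2_length Hg0'). apply Permutation_length in Pg. simpl in Pg, Hlen. lia. }
    destruct (IH g0' Hlen0) as [y [r' [Py Hy]]].
    { intros y Hy. destruct (Forall2_in_r R g0 g0' y Hg0' Hy) as [x [_ [Ry _]]]. auto. }
    assert (Hflip : Forall2 (fun y x => R x y) g0' g0).
    { clear -Hg0'. induction Hg0'; constructor; auto. }
    destruct (Permutation_Forall2 Py Hflip) as [m [Pm Fm]].
    destruct m as [|x r]; [inversion Fm|]. inversion Fm as [|? ? ? ? Rxy Fr].
    exists x, (x0 :: r). split.
    + eapply perm_trans. exact Pg. eapply perm_trans. apply perm_skip. exact Pm. apply perm_swap.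
    + destruct Rxy as [_ [c Ec]]. rewrite Ec. apply span_add.
      * apply (span_sub_span r'); auto. intros z Hz.
        destruct (Forall2_in_l _ r' r z Fr Hz) as [w [Hw [_ [c' Ew]]]].
        symmetry in Ew. apply add_move in Ew. rewrite Ew. apply span_add.
        apply span_elem; right; auto. rewrite <- smul_opp1. apply span_smul, span_smul, span_elem; left; auto.
      * apply span_smul, span_elem; left; auto.
Qed.


Definition orth {A : CBanachAlgebra} (g : list A) : Prop :=
  (forall x, In x g -> x *' x = x /\ x <> zero A /\ socle A x) /\
  (forall g1 x g2, g = g1 ++ x :: g2 -> forall y, In y (g1 ++ g2) -> x *' y = zero A /\ y *' x = zero A).

Lemma sumL_app {A : CBanachAlgebra} (l1 l2 : list A) : sumL (l1 ++ l2) = sumL l1 +' sumL l2.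
Proof. induction l1; simpl. rewrite add_0_l; auto. unfold sumL in *. simpl. rewrite IHl1, add_assoc. auto. Qed.

Lemma sumL_cons {A : CBanachAlgebra} (x : A) l : sumL (x :: l) = x +' sumL l.
Proof. auto. Qed.

Lemma sumL_mul_r {A : CBanachAlgebra} (l : list A) x : (forall y, In y l -> y *' x = zero A) -> sumL l *' x = zero A.
Proof. induction l; intros H. apply mul_0_l. rewrite sumL_cons, mul_add_l, H, IHl, add_zero; auto.
  intros; apply H; right; auto. left; auto. Qed.
Lemma sumL_mul_l {A : CBanachAlgebra} (l : list A) x : (forall y, In y l -> x *' y = zero A) -> x *' sumL l = zero A.
Proof. induction l; intros H. apply mul_0_r. rewrite sumL_cons, mul_add_r, H, IHl, add_zero; auto.
  intros; apply H; right; auto. left; auto. Qed.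
Lemma sumL_fix_l {A : CBanachAlgebra} (l : list A) e : (forall y, In y l -> e *' y = y) -> e *' sumL l = sumL l.
Proof. induction l; intros H. apply mul_0_r. rewrite !sumL_cons, mul_add_r, H, IHl; auto.
  intros; apply H; right; auto. left; auto. Qed.
Lemma soc_sumL {A : CBanachAlgebra} (l : list A) : (forall y, In y l -> socle A y) -> socle A (sumL l).
Proof. induction l; intros H. constructor. rewrite sumL_cons. apply soc_add. apply H; left; auto.
  apply IHl; intros; apply H; right; auto. Qed.

Lemma orth_ex {A : CBanachAlgebra} (g : list A) x : orth g -> In x g -> sumL g *' x = x /\ x *' sumL g = x.
Proof.
  intros [H1 H2] Hx. destruct (in_split x g Hx) as [g1 [g2 Eg]].
  pose proof (H2 g1 x g2 Eg) as Ho.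
  assert (Hxx : x *' x = x) by (apply H1; auto).
  rewrite Eg, sumL_app, sumL_cons. split.
  - rewrite mul_add_l, mul_add_l, Hxx, sumL_mul_r, sumL_mul_r, add_0_l, add_zero; auto.
    + intros y Hy. apply (Ho y). apply in_or_app; right; auto.
    + intros y Hy. apply (Ho y). apply in_or_app; left; auto.
  - rewrite mul_add_r, mul_add_r, Hxx, sumL_mul_l, sumL_mul_l, add_0_l, add_zero; auto.
    + intros y Hy. apply (Ho y). apply in_or_app; right; auto.
    + intros y Hy. apply (Ho y). apply in_or_app; left; auto.
Qed.

Lemma orth_ee {A : CBanachAlgebra} (g : list A) : orth g -> sumL g *' sumL g = sumL g.
Proof. intros H. apply sumL_fix_l. intros; apply orth_ex; auto. Qed.

Lemma span_annih {A : CBanachAlgebra} (r : list A) x w : (forall y, In y r -> x *' y = zero A) ->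
  in_span A r w -> x *' w = zero A.
Proof. intros H. induction 1. apply mul_0_r. rewrite mul_add_r, mul_smul_r, H, IHin_span, smul_zero, add_zero; auto. Qed.

Lemma orth_indep {A : CBanachAlgebra} (g : list A) : orth g ->
  (exists x r, Permutation g (x :: r) /\ in_span A r x) -> False.
Proof.
  intros [H1 H2] [x [r [Pg Hx]]].
  destruct (Permutation_vs_cons_inv Pg) as [l1 [l2 E]].
  assert (Pr : Permutation r (l1 ++ l2)).
  { apply (@Permutation_cons_app_inv _ _ _ _ x). rewrite <- E. symmetry; auto. }
  assert (Ing : In x g). { rewrite E. apply in_or_app; right; left; auto. }
  destruct (H1 x Ing) as [Hxx [Hnz _]].
  apply Hnz. rewrite <- Hxx. apply (span_annih r); auto.
  intros y Hy. apply (H2 l1 x l2 E y). apply (Permutation_in _ Pr Hy).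
Qed.

Lemma soc_nonann {A : CBanachAlgebra} (t u : A) : socle A t -> t *' u <> zero A ->
  exists L x, minimal_left_ideal A L /\ L x /\ x *' u <> zero A.
Proof.
  induction 1; intros Hn. exfalso; apply Hn, mul_0_l.
  destruct (classic (x *' u = zero A)) as [Z|Z].
  - apply IHsocle. rewrite mul_add_l, Z, add_0_l in Hn. auto.
  - exists L, x; auto.
Qed.

Lemma new_idem {A : CBanachAlgebra} (hA : semisimple A) (g : list A) s :
  orth g -> socle A s -> s *' sumL g <> s -> exists h, orth (h :: g).
Proof.
  intros Hg Ss Hs. set (e := sumL g).
  assert (He : e *' e = e) by (apply orth_ee; auto).
  assert (Hxe : forall x, In x g -> e *' x = x /\ x *' e = x) by (intros; apply orth_ex; auto).
  set (t := s -' s *' e). set (u := one A -' e).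
  assert (St : socle A t) by (apply soc_sub; auto; apply soc_rmul; auto).
  assert (Hte : t *' e = zero A) by (unfold t; rewrite mul_sub_l, <- mul_assoc, He, sub_diag; auto).
  assert (Htu : t *' u = t) by (unfold u; rewrite mul_sub_r, mul_one_r, Hte, sub_0_r; auto).
  assert (Ht0 : t <> zero A). { intros E. apply Hs. symmetry. apply sub_eq0. auto. }
  assert (Heu : e *' u = zero A) by (unfold u; rewrite mul_sub_r, mul_one_r, He, sub_diag; auto).
  assert (Hue : u *' e = zero A) by (unfold u; rewrite mul_sub_l, mul_one_l, He, sub_diag; auto).
  destruct (soc_nonann t u St) as [L [x [ML [Lx Hxu]]]]. rewrite Htu; auto.
  destruct (rimage_min L u ML) as [Z|ML'].
  { exfalso. apply Hxu, Z; auto. }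
  destruct (brauer hA _ ML') as [f Mf].
  destruct (mi_in _ _ Mf) as [w [Lw Ef]].
  assert (Hfe : f *' e = zero A) by (rewrite Ef, <- mul_assoc, Hue, mul_0_r; auto).
  assert (Hfu : f *' u = f) by (unfold u; rewrite mul_sub_r, mul_one_r, Hfe, sub_0_r; auto).
  pose proof (mi_idem _ _ Mf) as Hff. pose proof (mi_nz _ _ Mf) as Hfnz.
  assert (Sf : socle A f).
  { rewrite <- (add_zero _ f). econstructor. apply ML'. apply (mi_in _ _ Mf). constructor. }
  set (h := u *' f).
  assert (Hhe : h *' e = zero A) by (unfold h; rewrite <- mul_assoc, Hfe, mul_0_r; auto).
  assert (Heh : e *' h = zero A) by (unfold h; rewrite mul_assoc, Heu, mul_0_l; auto).
  assert (Hhh : h *' h = h) by (unfold h; rewrite mul_assoc, <- (mul_assoc _ u f u), Hfu, <- mul_assoc, Hff; auto).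
  assert (Hh0 : h <> zero A).
  { intros E. apply Hfnz. rewrite <- Hff, <- Hfu at 1. rewrite <- mul_assoc. fold h. rewrite E, mul_0_r. auto. }
  assert (Hhx : forall x, In x g -> h *' x = zero A /\ x *' h = zero A).
  { intros y Hy. destruct (Hxe y Hy) as [E1 E2]. split.
    - rewrite <- E1, mul_assoc, Hhe, mul_0_l; auto.
    - rewrite <- E2, <- mul_assoc, Heh, mul_0_r; auto. }
  exists h. destruct Hg as [G1 G2]. split.
  - intros y [<-|Hy]. split; auto. split; auto. apply soc_lmul; auto. apply G1; auto.
  - intros g1 y g2 E z Hz. destruct g1 as [|h' g1'].
    + simpl in E. injection E as <- <-. simpl in Hz. apply Hhx; auto.
    + simpl in E. injection E as <- Eg. assert (Iny : In y g). { rewrite Eg. apply in_or_app; right; left; auto. }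
      simpl in Hz. destruct Hz as [<-|Hz].
      * destruct (Hhx y Iny); split; auto.
      * apply (G2 g1' y g2 Eg z Hz).
Qed.

Lemma iterate {A : CBanachAlgebra} (hA : semisimple A) k :
  exists g, orth g /\ ((k <= length g)%nat \/ forall s, socle A s -> s *' sumL g = s).
Proof.
  induction k.
  - exists nil. split. split. intros x []. intros g1 x g2 E. destruct g1; discriminate. left; lia.
  - destruct IHk as [g [Hg [Hk|Hid]]].
    + destruct (classic (forall s, socle A s -> s *' sumL g = s)) as [Hid|Hn].
      * exists g; auto.
      * apply not_all_ex_not in Hn. destruct Hn as [s Hs]. apply imply_to_and in Hs.
        destruct (new_idem hA g s Hg (proj1 Hs) (proj2 Hs)) as [h Hh].
        exists (h :: g). split; auto. left. simpl. lia.
    + exists g; auto.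
Qed.

Lemma sub_sub_cancel_r {A : CBanachAlgebra} (a b c : A) : (a -' b) -' (c -' b) = a -' c.
Proof. rewrite opp_add, opp_opp, <- add_assoc, (add_assoc _ (-' b)), (add_comm _ (-' b) (-' c)), <- add_assoc,
  add_opp_l, add_zero. auto. Qed.

Lemma fwd_dir {A : CBanachAlgebra} (hA : semisimple A) :
  finite_dimensional A (socle A) -> has_identity A (closure A (socle A)).
Proof.
  intros [l Hl].
  destruct (iterate hA (S (length l))) as [g [Hg [Hk|Hid]]].
  { exfalso. apply (orth_indep g Hg). apply (dep_lemma l). lia.
    intros x Hx. apply Hl. apply (proj1 Hg x Hx). }
  set (e := sumL g).
  assert (Se : socle A e) by (apply soc_sumL; intros; apply (proj1 Hg); auto).
  assert (He : e *' e = e) by (apply orth_ee; auto).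
  assert (Hle : forall s, socle A s -> e *' s = s).
  { intros s Ss. set (u := one A -' e). set (t := u *' s).
    assert (Ht : t = zero A).
    { apply semiprime; auto. intros a c.
      assert (Hz : s *' c *' u = zero A).
      { unfold u. rewrite mul_sub_r, mul_one_r, Hid, sub_diag; auto. apply soc_rmul; auto. }
      unfold t. replace (a *' (u *' s) *' (c *' (u *' s))) with (a *' u *' (s *' c *' u) *' s)
        by (repeat rewrite mul_assoc; reflexivity).
      rewrite Hz, mul_0_r, mul_0_l. auto. }
    unfold t, u in Ht. rewrite mul_sub_l, mul_one_l in Ht. symmetry. apply sub_eq0. auto. }
  exists e. split. apply soc_in_closure; auto.
  intros x Cx. pose proof (norm_nonneg A e) as Hne.
  split; apply eq_of_norm; intros eps Heps.
  - destruct (Cx (eps / (norm A e + 2))) as [s [Ss Hs]]. apply Rdiv_lt_0_compat; lra.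
    replace (e *' x -' x) with (e *' (x -' s) -' (x -' s)).
    2: { rewrite mul_sub_r, (Hle s Ss). apply sub_sub_cancel_r. }
    eapply Rle_lt_trans. apply norm_sub_le. eapply Rle_lt_trans. apply Rplus_le_compat_r. apply norm_mul.
    pose proof (norm_nonneg A (x -' s)).
    assert (norm A e * norm A (x -' s) + norm A (x -' s) = (norm A e + 1) * norm A (x -' s)) by ring.
    rewrite H0. apply (Rmult_lt_reg_r (/ (norm A e + 1))). apply Rinv_0_lt_compat; lra.
    replace ((norm A e + 1) * norm A (x -' s) * / (norm A e + 1)) with (norm A (x -' s)) by (field; lra).
    eapply Rlt_trans. apply Hs. unfold Rdiv. apply Rmult_lt_compat_l; auto.
    apply Rinv_lt_contravar. apply Rmult_lt_0_compat; lra. lra.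
  - destruct (Cx (eps / (norm A e + 2))) as [s [Ss Hs]]. apply Rdiv_lt_0_compat; lra.
    replace (x *' e -' x) with ((x -' s) *' e -' (x -' s)).
    2: { rewrite mul_sub_l, (Hid s Ss : s *' e = s). apply sub_sub_cancel_r. }
    eapply Rle_lt_trans. apply norm_sub_le. eapply Rle_lt_trans. apply Rplus_le_compat_r. apply norm_mul.
    pose proof (norm_nonneg A (x -' s)).
    assert (norm A (x -' s) * norm A e + norm A (x -' s) = (norm A e + 1) * norm A (x -' s)) by ring.
    rewrite H0. apply (Rmult_lt_reg_r (/ (norm A e + 1))). apply Rinv_0_lt_compat; lra.
    replace ((norm A e + 1) * norm A (x -' s) * / (norm A e + 1)) with (norm A (x -' s)) by (field; lra).
    eapply Rlt_trans. apply Hs. unfold Rdiv. apply Rmult_lt_compat_l; auto.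
    apply Rinv_lt_contravar. apply Rmult_lt_0_compat; lra. lra.
Qed.

Theorem proposition1p8 (A : CBanachAlgebra) (hA : semisimple A) :
  finite_dimensional A (socle A) <-> has_identity A (closure A (socle A)).
Proof. split. apply fwd_dir; auto. apply rev_dir; auto. Qed.
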